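(* Let $\mathrm{Ha}>0$ and $\mathrm{Pm}>0$, let $\mathrm{Re}>0$, and put $\mathrm{Rm}=\mathrm{Pm}\,\mathrm{Re}$ and $A=\mathrm{Ha}^2\mathrm{Pm}$. Consider either of the following basic (laminar) solutions $\mathbf v=(U(z),0,0)$, $\hat{\mathbf B}=(\bar B(z),0,\mathrm{Rm}^{-1})$ of the stationary non-dimensional magnetohydrodynamics equations in the layer $\mathbb R^2\times[-1,1]$: (i) the magnetic Couette flow $U(z)=\dfrac{\sinh(\mathrm{Ha}\,z)}{\sinh(\mathrm{Ha})}$, $\bar B(z)=\dfrac{\cosh(\mathrm{Ha})-\cosh(\mathrm{Ha}\,z)}{\mathrm{Ha}\sinh(\mathrm{Ha})}$; (ii) the Hartmann flow $U(z)=\dfrac{\cosh(\mathrm{Ha})-\cosh(\mathrm{Ha}\,z)}{\cosh(\mathrm{Ha})-1}$, $\bar B(z)=\dfrac{\sinh(\mathrm{Ha}\,z)-z\sinh(\mathrm{Ha})}{\mathrm{Ha}(\cosh(\mathrm{Ha})-1)}$. Let $\mathrm{Re}_E$ be the energy critical Reynolds number defined in the context. If $\mathrm{Re}<\mathrm{Re}_E$, then the basic magnetic Couette and Hartmann motions are monotonically asymptotically stable in the energy norm $E$: every perturbation $(\mathbf u,\mathbf h,\bar\pi)$ as described in the context satisfies $$E(t)\le E(0)\,e^{\frac{\pi^2}{2}c_0(\mathrm{Re}-\mathrm{Re}_E)t}\qquad\text{for all }t\ge 0,$$ with a positive constant $c_0$ depending on $\mathrm{Ha}$ and $\mathrm{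Pm}$.
   Context: Perturbations: $\mathbf u=(u,v,w)$, $\mathbf h=(h,k,\ell)$, $\bar\pi$ are $C^2$ functions of $(x,y,z,t)$, $z\in[-1,1]$, periodic in $x$ and $y$ with periodicity cell $\Omega=[0,2\pi/a]\times[0,2\pi/b]\times[-1,1]$, satisfying rigid and non-conducting boundary conditions $\mathbf u=\mathbf h=0$ on $z=\pm1$, and solving $$\mathbf u_t+U\mathbf u_x+wU'\mathbf i+\mathbf u\cdot\nabla\mathbf u=A\Big[\bar B\mathbf h_x+\frac{\mathbf h_z}{\mathrm{Rm}}+\ell\bar B'\mathbf i+\mathbf h\cdot\nabla\mathbf h\Big]-\nabla\bar\pi+\frac{\Delta\mathbf u}{\mathrm{Re}},$$ $$\mathbf h_t+w\bar B'\mathbf i+U\mathbf h_x+\mathbf u\cdot\nabla\mathbf h-\bar B\mathbf u_x-\frac{\mathbf u_z}{\mathrm{Rm}}-\ell U'\mathbf i-\mathbf h\cdot\nabla\mathbf u=\frac{\Delta\mathbf h}{\mathrm{Rm}},\qquad\nabla\cdot\mathbf u=\nabla\cdot\mathbf h=0,$$ where $\mathbf i$ is the unit vector in the $x$ direction and $'$ denotes $d/dz$. $(\cdot,\cdot)$ and $\|\cdot\|$ are the $L^2(\Omega)$ inner product and norm. The energy is $E(t)=\tfrac12(\|\mathbf u\|^2+A\|\mathbf h\|^2)$. Let $\mathcal S$ be the set of pairs $(\mathbf u,\mathbf h)$ of vector fields on $\Omega$ with components in $W^{1,2}(\Omega)$, periodic in $x,y$, vanishing at $z=\pm1$, divergence-free,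 with $\|\nabla\mathbf u\|+\|\nabla\mathbf h\|>0$. Define $$I=-(U'w,u)+A\big[(\ell\bar B',u)-(w\bar B',h)+(\ell U',h)\big],\qquad \mathcal D_1=\|\nabla u\|^2+\|\nabla w\|^2+\mathrm{Ha}^2\big[\|\nabla h\|^2+\|\nabla\ell\|^2\big].$$ The critical Reynolds number $\mathrm{Re}_E$ is defined by $\mathrm{Re}_E^{-1}=m=\max_{\mathcal S} I/\mathcal D_1$ (the maximum exists). *)

(* Defs.v *)
From Stdlib Require Import Reals.
From Coquelicot Require Import Coquelicot.
Open Scope R_scope.

Inductive basic_flow := MagneticCouette | Hartmann.

Definition Ubase (fl : basic_flow) (Ha z : R) : R :=
  match fl with
  | MagneticCouette => sinh (Ha * z) / sinh Ha
  | Hartmann => (cosh Ha - cosh (Ha * z)) / (cosh Ha - 1)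
  end.

Definition Bbase (fl : basic_flow) (Ha z : R) : R :=
  match fl with
  | MagneticCouette => (cosh Ha - cosh (Ha * z)) / (Ha * sinh Ha)
  | Hartmann => (sinh (Ha * z) - z * sinh Ha) / (Ha * (cosh Ha - 1))
  end.

Definition dU fl Ha z := Derive (Ubase fl Ha) z.
Definition dB fl Ha z := Derive (Bbase fl Ha) z.

Definition field4 := R -> R -> R -> R -> R.

Definition dx (f : field4) : field4 := fun x y z t => Derive (fun s => f s y z t) x.
Definition dy (f : field4) : field4 := fun x y z t => Derive (fun s => f x s z t) y.
Definition dz (f : field4) : field4 := fun x y z t => Derive (fun s => f x y s t) z.
Definition dt (f : field4) : field4 := fun x y z t => Derive (fun s => f x y z s) t.

Definition lap (f : field4) : field4 :=
  fun x y z t => dx (dx f) x y z t + dy (dy f) x y z t + dz (dz f) x y z t.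

Definition cont4 (f : field4) : Prop :=
  forall x y z t eps, 0 < eps -> exists delta, 0 < delta /\
    forall x' y' z' t', Rabs (x' - x) < delta -> Rabs (y' - y) < delta ->
      Rabs (z' - z) < delta -> Rabs (t' - t) < delta ->
      Rabs (f x' y' z' t' - f x y z t) < eps.

Definition ex_partials4 (f : field4) : Prop :=
  forall x y z t,
    ex_derive (fun s => f s y z t) x /\ ex_derive (fun s => f x s z t) y /\
    ex_derive (fun s => f x y s t) z /\ ex_derive (fun s => f x y z s) t.

Definition C1_4 (f : field4) : Prop :=
  ex_partials4 f /\ cont4 f /\ cont4 (dx f) /\ cont4 (dy f) /\ cont4 (dz f) /\ cont4 (dt f).

Definition C2_4 (f : field4) : Prop :=
  C1_4 f /\ C1_4 (dx f) /\ C1_4 (dy f) /\ C1_4 (dz f) /\ C1_4 (dt f).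

Definition periodic4 (a b : R) (f : field4) : Prop :=
  forall x y z t, f (x + 2 * PI / a) y z t = f x y z t /\ f x (y + 2 * PI / b) z t = f x y z t.

Definition int3 (a b : R) (g : R -> R -> R -> R) : R :=
  RInt (fun x => RInt (fun y => RInt (fun z => g x y z) (-1) 1) 0 (2 * PI / b)) 0 (2 * PI / a).

Definition energy (a b A : R) (u v w h k l : field4) (t : R) : R :=
  / 2 * (int3 a b (fun x y z => u x y z t ^ 2 + v x y z t ^ 2 + w x y z t ^ 2)
         + A * int3 a b (fun x y z => h x y z t ^ 2 + k x y z t ^ 2 + l x y z t ^ 2)).

Definition is_perturbation (fl : basic_flow) (a b Ha Pm Re : R)
    (u v w h k l p : field4) : Prop :=
  let Rm := Pm * Re in
  let A := Ha ^ 2 * Pm in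
  let U := Ubase fl Ha in let B := Bbase fl Ha in
  let U' := dU fl Ha in let B' := dB fl Ha in
  (C2_4 u /\ C2_4 v /\ C2_4 w /\ C2_4 h /\ C2_4 k /\ C2_4 l /\ C2_4 p) /\
  (periodic4 a b u /\ periodic4 a b v /\ periodic4 a b w /\ periodic4 a b h /\
   periodic4 a b k /\ periodic4 a b l /\ periodic4 a b p) /\
  (* rigid, non-conducting boundary conditions *)
  (forall x y t, 0 <= t -> forall z, (z = 1 \/ z = -1) ->
     u x y z t = 0 /\ v x y z t = 0 /\ w x y z t = 0 /\
     h x y z t = 0 /\ k x y z t = 0 /\ l x y z t = 0) /\
  (forall x y z t, -1 <= z <= 1 -> 0 <= t ->
    let adv (q : field4 * field4 * field4) (g : field4) :=
      (let '(q1, q2, q3) := q in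
       q1 x y z t * dx g x y z t + q2 x y z t * dy g x y z t + q3 x y z t * dz g x y z t) in
    let uu := (u, v, w) in let hh := (h, k, l) in
    dt u x y z t + U z * dx u x y z t + w x y z t * U' z + adv uu u
      = A * (B z * dx h x y z t + dz h x y z t / Rm + l x y z t * B' z + adv hh h)
        - dx p x y z t + lap u x y z t / Re /\
    dt v x y z t + U z * dx v x y z t + adv uu v
      = A * (B z * dx k x y z t + dz k x y z t / Rm + adv hh k)
        - dy p x y z t + lap v x y z t / Re /\
    dt w x y z t + U z * dx w x y z t + adv uu w
      = A * (B z * dx l x y z t + dz l x y z t / Rm + adv hh l)
        - dz p x y z t + lap w x y z t / Re /\
    dt h x y z t + w x y z t * B' z + U z * dx h x y z t + adv uu h
      - B z * dx u x y z t - dz u x y z t / Rm - l x y z t * U' z - adv hh u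
      = lap h x y z t / Rm /\
    dt k x y z t + U z * dx k x y z t + adv uu k
      - B z * dx v x y z t - dz v x y z t / Rm - adv hh v
      = lap k x y z t / Rm /\
    dt l x y z t + U z * dx l x y z t + adv uu l
      - B z * dx w x y z t - dz w x y z t / Rm - adv hh w
      = lap l x y z t / Rm /\
    dx u x y z t + dy v x y z t + dz w x y z t = 0 /\
    dx h x y z t + dy k x y z t + dz l x y z t = 0).

Definition field3 := R -> R -> R -> R.

Definition ex3 (f : field3) : field3 := fun x y z => Derive (fun s => f s y z) x.
Definition ey3 (f : field3) : field3 := fun x y z => Derive (fun s => f x s z) y.
Definition ez3 (f : field3) : field3 := fun x y z => Derive (fun s => f x y s) z.

Definition cont3 (f : field3) : Prop :=
  forall x y z eps, 0 < eps -> exists delta, 0 < delta /\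
    forall x' y' z', Rabs (x' - x) < delta -> Rabs (y' - y) < delta ->
      Rabs (z' - z) < delta -> Rabs (f x' y' z' - f x y z) < eps.

Definition C1_3 (f : field3) : Prop :=
  (forall x y z, ex_derive (fun s => f s y z) x /\ ex_derive (fun s => f x s z) y /\
                 ex_derive (fun s => f x y s) z) /\
  cont3 f /\ cont3 (ex3 f) /\ cont3 (ey3 f) /\ cont3 (ez3 f).

Definition admissible3 (a b : R) (f : field3) : Prop :=
  C1_3 f /\
  (forall x y z, f (x + 2 * PI / a) y z = f x y z /\ f x (y + 2 * PI / b) z = f x y z) /\
  (forall x y, f x y 1 = 0 /\ f x y (-1) = 0).

Definition gradsq (a b : R) (f : field3) : R :=
  int3 a b (fun x y z => ex3 f x y z ^ 2 + ey3 f x y z ^ 2 + ez3 f x y z ^ 2).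

Definition in_S (a b : R) (u v w h k l : field3) : Prop :=
  admissible3 a b u /\ admissible3 a b v /\ admissible3 a b w /\
  admissible3 a b h /\ admissible3 a b k /\ admissible3 a b l /\
  (forall x y z, ex3 u x y z + ey3 v x y z + ez3 w x y z = 0) /\
  (forall x y z, ex3 h x y z + ey3 k x y z + ez3 l x y z = 0) /\
  sqrt (gradsq a b u + gradsq a b v + gradsq a b w)
    + sqrt (gradsq a b h + gradsq a b k + gradsq a b l) > 0.

Definition Ifun (fl : basic_flow) (a b Ha Pm : R) (u v w h k l : field3) : R :=
  let A := Ha ^ 2 * Pm in
  - int3 a b (fun x y z => dU fl Ha z * w x y z * u x y z)
  + A * (int3 a b (fun x y z => l x y z * dB fl Ha z * u x y z)
         - int3 a b (fun x y z => w x y z * dB fl Ha z * h x y z)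
         + int3 a b (fun x y z => l x y z * dU fl Ha z * h x y z)).

Definition D1fun (a b Ha : R) (u v w h k l : field3) : R :=
  gradsq a b u + gradsq a b w + Ha ^ 2 * (gradsq a b h + gradsq a b l).

(* m is the maximum (here: least upper bound) of I/D_1 over S;  Re_E = 1/m *)
Definition is_sup_ratio (fl : basic_flow) (a b Ha Pm m : R) : Prop :=
  (forall u v w h k l, in_S a b u v w h k l ->
     Ifun fl a b Ha Pm u v w h k l / D1fun a b Ha u v w h k l <= m) /\
  (forall m', (forall u v w h k l, in_S a b u v w h k l ->
     Ifun fl a b Ha Pm u v w h k l / D1fun a b Ha u v w h k l <= m') -> m <= m').

(* Main.v *)
Require Import Defs.
From Stdlib Require Import Reals Lra Lia Psatz FunctionalExtensionality Classical.
From Coquelicot Require Import Coquelicot.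
Open Scope R_scope.

Lemma cont_of_eps (f : R -> R) x :
  (forall eps, 0 < eps -> exists d, 0 < d /\ forall y, Rabs (y - x) < d -> Rabs (f y - f x) < eps) ->
  continuous f x.
Proof.
  intros H. apply filterlim_locally. intros eps.
  destruct (H eps (cond_pos eps)) as [d [Hd Hy]].
  exists (mkposreal d Hd). intros y Hb. apply Hy. exact Hb.
Qed.

Lemma eps_of_cont (f : R -> R) x : continuous f x ->
  forall eps, 0 < eps -> exists d, 0 < d /\ forall y, Rabs (y - x) < d -> Rabs (f y - f x) < eps.
Proof.
  intros H eps He. destruct (proj1 (filterlim_locally f (f x)) H (mkposreal eps He)) as [d Hd].
  exists d. split. apply cond_pos. intros y Hy. apply (Hd y). exact Hy.
Qed.

Lemma unif (P : Type) (N : R -> P -> Prop) (p0 : P) (F : P -> R -> R) (a b : R) :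
  a <= b ->
  (forall d, 0 < d -> N d p0) ->
  (forall d1 d2 p, d1 <= d2 -> N d1 p -> N d2 p) ->
  (forall z, a <= z <= b -> forall eps, 0 < eps -> exists d, 0 < d /\
     forall p z', N d p -> Rabs (z' - z) < d -> Rabs (F p z' - F p0 z) < eps) ->
  forall eps, 0 < eps -> exists d, 0 < d /\
     forall p z, N d p -> a <= z <= b -> Rabs (F p z - F p0 z) < eps.
Proof.
  intros Hab HN0 HNm Hc eps He.
  assert (key : forall c, a <= c <= b -> exists dc, 0 < dc /\
     forall p z, N dc p -> Rabs (z - c) < dc -> Rabs (F p z - F p0 z) < eps).
  { intros c Hcab. destruct (Hc c Hcab (eps/2)) as [d [Hd Hd']]; [lra|].
    exists d; split; [lra|]. intros p z Hp Hz.
    pose proof (Hd' p z Hp Hz). pose proof (Hd' p0 z (HN0 d Hd) Hz).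
    replace (F p z - F p0 z) with ((F p z - F p0 c) - (F p0 z - F p0 c)) by ring.
    eapply Rle_lt_trans; [apply Rabs_triang|]. rewrite Rabs_Ropp. lra. }
  set (S := fun s => a <= s <= b /\ exists d, 0 < d /\
     forall p z, N d p -> a <= z <= s -> Rabs (F p z - F p0 z) < eps).
  assert (Sa : S a).
  { destruct (key a) as [da [Hda Hda']]; [lra|]. split; [lra|]. exists da; split; auto.
    intros p z Hp Hz. apply Hda'; auto. replace (z - a) with 0 by lra. rewrite Rabs_R0; lra. }
  assert (Sb : bound S). { exists b. intros s [Hs _]. lra. }
  destruct (completeness S Sb (ex_intro _ a Sa)) as [c [Hub Hlub]].
  assert (Hac : a <= c) by (apply Hub; exact Sa).
  assert (Hcb : c <= b) by (apply Hlub; intros s [Hs _]; lra).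
  destruct (key c) as [dc [Hdc Hdc']]; [lra|].
  assert (Hex : exists s, S s /\ c - dc < s).
  { apply NNPP. intros Hn. assert (c <= c - dc); [|lra].
    apply Hlub. intros s Hs. destruct (Rle_lt_dec s (c - dc)); auto.
    exfalso. apply Hn. exists s; auto. }
  destruct Hex as [s [[Hs [ds [Hds Hds']]] Hsc]].
  assert (Hsc' : s <= c) by (apply Hub; split; [lra|exists ds; auto]).
  set (c' := Rmin b (c + dc/2)).
  assert (Sc' : S c').
  { split. unfold c'. split. apply Rmin_glb; lra. apply Rmin_l.
    exists (Rmin ds dc). split. apply Rmin_glb_lt; lra.
    intros p z Hp Hz. destruct (Rle_lt_dec z s).
    - apply Hds'. apply (HNm (Rmin ds dc)); auto. apply Rmin_l. lra.
    - apply Hdc'. apply (HNm (Rmin ds dc)); auto. apply Rmin_r.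
      assert (z <= c + dc/2) by (pose proof (Rmin_r b (c + dc/2)); unfold c' in Hz; lra).
      apply Rabs_def1; lra. }
  assert (Hc'c : c' <= c) by (apply Hub; exact Sc').
  assert (Hbc : c' = b).
  { unfold c' in *. destruct (Rle_dec b (c + dc/2)).
    rewrite Rmin_left; auto. rewrite Rmin_right in Hc'c; lra. }
  destruct Sc' as [_ [d [Hd Hd']]]. exists d. split; auto.
  intros p z Hp Hz. apply Hd'; auto. lra.
Qed.

Lemma RInt_minusR (f g : R -> R) a b : ex_RInt f a b -> ex_RInt g a b ->
  RInt (fun x => f x - g x) a b = RInt f a b - RInt g a b.
Proof. intros. apply (RInt_minus f g a b); auto. Qed.
Lemma RInt_plusR (f g : R -> R) a b : ex_RInt f a b -> ex_RInt g a b ->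
  RInt (fun x => f x + g x) a b = RInt f a b + RInt g a b.
Proof. intros. apply (RInt_plus f g a b); auto. Qed.
Lemma RInt_scalR (f : R -> R) a b c : ex_RInt f a b ->
  RInt (fun x => c * f x) a b = c * RInt f a b.
Proof. intros. apply (RInt_scal f a b c); auto. Qed.
Lemma ex_RInt_minusR (f g : R -> R) a b : ex_RInt f a b -> ex_RInt g a b ->
  ex_RInt (fun x => f x - g x) a b.
Proof. intros. apply (ex_RInt_minus f g a b); auto. Qed.

Lemma param_cont (P : Type) (N : R -> P -> Prop) (p0 : P) (F : P -> R -> R) (a b : R) :
  a <= b ->
  (forall d, 0 < d -> N d p0) ->
  (forall d1 d2 p, d1 <= d2 -> N d1 p -> N d2 p) ->
  (forall z, a <= z <= b -> forall eps, 0 < eps -> exists d, 0 < d /\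
     forall p z', N d p -> Rabs (z' - z) < d -> Rabs (F p z' - F p0 z) < eps) ->
  (forall p, ex_RInt (F p) a b) ->
  forall eps, 0 < eps -> exists d, 0 < d /\
     forall p, N d p -> Rabs (RInt (F p) a b - RInt (F p0) a b) < eps.
Proof.
  intros Hab HN0 HNm Hc Hi eps He.
  destruct (unif P N p0 F a b Hab HN0 HNm Hc (eps / (2 * (b - a + 1)))) as [d [Hd Hd']].
  { apply Rdiv_lt_0_compat; lra. }
  exists d; split; auto. intros p Hp.
  rewrite <- RInt_minusR; auto.
  eapply Rle_lt_trans. apply abs_RInt_le_const; auto. apply ex_RInt_minusR; auto.
  intros t Ht. left. apply Hd'; auto.
  apply Rle_lt_trans with ((b - a + 1) * (eps / (2 * (b - a + 1)))).
  apply Rmult_le_compat_r. left; apply Rdiv_lt_0_compat; lra. lra.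
  replace ((b - a + 1) * (eps / (2 * (b - a + 1)))) with (eps/2) by (field; lra). lra.
Qed.

Lemma plus_close a b eps : 0 < eps -> exists e, 0 < e /\ forall a' b',
  Rabs (a' - a) < e -> Rabs (b' - b) < e -> Rabs (a' + b' - (a + b)) < eps.
Proof.
  intros He. exists (eps/2). split; [lra|]. intros a' b' H1 H2.
  replace (a' + b' - (a + b)) with ((a' - a) + (b' - b)) by ring.
  eapply Rle_lt_trans; [apply Rabs_triang|]. lra.
Qed.

Lemma minus_close a b eps : 0 < eps -> exists e, 0 < e /\ forall a' b',
  Rabs (a' - a) < e -> Rabs (b' - b) < e -> Rabs (a' - b' - (a - b)) < eps.
Proof.
  intros He. exists (eps/2). split; [lra|]. intros a' b' H1 H2.
  replace (a' - b' - (a - b)) with ((a' - a) + - (b' - b)) by ring.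
  eapply Rle_lt_trans; [apply Rabs_triang|]. rewrite Rabs_Ropp. lra.
Qed.

Lemma mult_close a b eps : 0 < eps -> exists e, 0 < e /\ forall a' b',
  Rabs (a' - a) < e -> Rabs (b' - b) < e -> Rabs (a' * b' - a * b) < eps.
Proof.
  intros He. set (e := Rmin 1 (eps / (Rabs a + Rabs b + 1))).
  assert (Hpos : 0 < Rabs a + Rabs b + 1) by (pose proof (Rabs_pos a); pose proof (Rabs_pos b); lra).
  assert (He0 : 0 < e) by (apply Rmin_glb_lt; [lra| apply Rdiv_lt_0_compat; lra]).
  assert (He1 : e <= 1) by apply Rmin_l.
  assert (He2 : e * (Rabs a + Rabs b + 1) <= eps).
  { pose proof (Rmin_r 1 (eps / (Rabs a + Rabs b + 1))). fold e in H.
    apply Rmult_le_compat_r with (r := Rabs a + Rabs b + 1) in H; [|lra].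
    replace (eps / (Rabs a + Rabs b + 1) * (Rabs a + Rabs b + 1)) with eps in H by (field; lra). lra. }
  exists e. split; auto. intros a' b' H1 H2.
  replace (a' * b' - a * b) with ((a' - a) * (b' - b) + ((a' - a) * b + a * (b' - b))) by ring.
  eapply Rle_lt_trans; [apply Rabs_triang|].
  eapply Rle_lt_trans; [apply Rplus_le_compat_l; apply Rabs_triang|].
  rewrite !Rabs_mult.
  pose proof (Rabs_pos (a' - a)). pose proof (Rabs_pos (b' - b)).
  pose proof (Rabs_pos a). pose proof (Rabs_pos b).
  assert (Rabs (a' - a) * Rabs (b' - b) <= e * Rabs (b' - b)) by (apply Rmult_le_compat_r; lra).
  assert (Rabs (a' - a) * Rabs b <= e * Rabs b) by (apply Rmult_le_compat_r; lra).
  assert (Rabs a * Rabs (b' - b) <= Rabs a * e) by (apply Rmult_le_compat_l; lra).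
  assert (e * Rabs (b' - b) < e * 1) by (apply Rmult_lt_compat_l; lra).
  nra.
Qed.

Lemma cont4_op2 (op : R -> R -> R)
  (Hop : forall a b eps, 0 < eps -> exists e, 0 < e /\ forall a' b',
     Rabs (a' - a) < e -> Rabs (b' - b) < e -> Rabs (op a' b' - op a b) < eps)
  (F G : field4) : cont4 F -> cont4 G -> cont4 (fun x y z t => op (F x y z t) (G x y z t)).
Proof.
  intros HF HG x y z t eps He.
  destruct (Hop (F x y z t) (G x y z t) eps He) as [e [He0 He']].
  destruct (HF x y z t e He0) as [d1 [Hd1 Hd1']].
  destruct (HG x y z t e He0) as [d2 [Hd2 Hd2']].
  exists (Rmin d1 d2). split. apply Rmin_glb_lt; auto.
  intros x' y' z' t' H1 H2 H3 H4. apply He'.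
  apply Hd1'; eapply Rlt_le_trans; eauto; apply Rmin_l.
  apply Hd2'; eapply Rlt_le_trans; eauto; apply Rmin_r.
Qed.

Lemma cont4_plus F G : cont4 F -> cont4 G -> cont4 (fun x y z t => F x y z t + G x y z t).
Proof. apply (cont4_op2 Rplus plus_close). Qed.
Lemma cont4_minus F G : cont4 F -> cont4 G -> cont4 (fun x y z t => F x y z t - G x y z t).
Proof. apply (cont4_op2 Rminus minus_close). Qed.
Lemma cont4_mult F G : cont4 F -> cont4 G -> cont4 (fun x y z t => F x y z t * G x y z t).
Proof. apply (cont4_op2 Rmult mult_close). Qed.
Lemma cont4_const c : cont4 (fun _ _ _ _ => c).
Proof. intros x y z t eps He. exists 1. split; [lra|]. intros. rewrite Rminus_eq_0, Rabs_R0. lra. Qed.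
Lemma cont4_opp F : cont4 F -> cont4 (fun x y z t => - F x y z t).
Proof.
  intros HF. assert (H := cont4_minus (fun _ _ _ _ => 0) F (cont4_const 0) HF).
  intros x y z t eps He. destruct (H x y z t eps He) as [d [Hd Hd']]. exists d; split; auto.
  intros. replace (- F x' y' z' t' - - F x y z t) with (0 - F x' y' z' t' - (0 - F x y z t)) by ring. auto.
Qed.
Lemma cont4_div F c : cont4 F -> cont4 (fun x y z t => F x y z t / c).
Proof. intros HF. unfold Rdiv. apply (cont4_mult F (fun _ _ _ _ => / c)); auto. apply cont4_const. Qed.
Lemma cont4_pow F n : cont4 F -> cont4 (fun x y z t => F x y z t ^ n).
Proof.
  intros HF. induction n. simpl. apply cont4_const.
  simpl. apply (cont4_mult F (fun x y z t => F x y z t ^ n)); auto.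
Qed.
Lemma cont4_zfun (W : R -> R) : (forall z, continuous W z) -> cont4 (fun x y z t => W z).
Proof.
  intros HW x y z t eps He. destruct (eps_of_cont W z (HW z) eps He) as [d [Hd Hd']].
  exists d. split; auto.
Qed.

Ltac c4 := repeat first [ assumption | apply cont4_plus | apply cont4_minus | apply cont4_mult
  | apply cont4_opp | apply cont4_div | apply cont4_pow | apply cont4_const | apply cont4_zfun ].

Lemma cont4_cz F x y z t : cont4 F -> continuous (fun s => F x y s t) z.
Proof.
  intros HF. apply cont_of_eps. intros eps He. destruct (HF x y z t eps He) as [d [Hd Hd']].
  exists d; split; auto. intros s Hs. apply Hd'; auto; rewrite Rminus_eq_0, Rabs_R0; auto.
Qed.
Lemma cont4_cx F x y z t : cont4 F -> continuous (fun s => F s y z t) x.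
Proof.
  intros HF. apply cont_of_eps. intros eps He. destruct (HF x y z t eps He) as [d [Hd Hd']].
  exists d; split; auto. intros s Hs. apply Hd'; auto; rewrite Rminus_eq_0, Rabs_R0; auto.
Qed.
Lemma cont4_cy F x y z t : cont4 F -> continuous (fun s => F x s z t) y.
Proof.
  intros HF. apply cont_of_eps. intros eps He. destruct (HF x y z t eps He) as [d [Hd Hd']].
  exists d; split; auto. intros s Hs. apply Hd'; auto; rewrite Rminus_eq_0, Rabs_R0; auto.
Qed.
Lemma cont4_ct F x y z t : cont4 F -> continuous (fun s => F x y z s) t.
Proof.
  intros HF. apply cont_of_eps. intros eps He. destruct (HF x y z t eps He) as [d [Hd Hd']].
  exists d; split; auto. intros s Hs. apply Hd'; auto; rewrite Rminus_eq_0, Rabs_R0; auto.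
Qed.

Definition cont2 (f : R -> R -> R) : Prop :=
  forall x t eps, 0 < eps -> exists delta, 0 < delta /\
    forall x' t', Rabs (x' - x) < delta -> Rabs (t' - t) < delta -> Rabs (f x' t' - f x t) < eps.

Lemma c2d_tz F x y t z : cont4 F -> continuity_2d_pt (fun s z => F x y z s) t z.
Proof.
  intros HF eps. destruct (HF x y z t eps (cond_pos eps)) as [d [Hd Hd']].
  exists (mkposreal d Hd). intros u v Hu Hv. simpl in *. apply Hd'; auto; rewrite Rminus_eq_0, Rabs_R0; auto.
Qed.
Lemma c2d_xz F x y t z : cont4 F -> continuity_2d_pt (fun s z => F s y z t) x z.
Proof.
  intros HF eps. destruct (HF x y z t eps (cond_pos eps)) as [d [Hd Hd']].
  exists (mkposreal d Hd). intros u v Hu Hv. simpl in *. apply Hd'; auto; rewrite Rminus_eq_0, Rabs_R0; auto.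
Qed.
Lemma c2d_yz F x y t z : cont4 F -> continuity_2d_pt (fun s z => F x s z t) y z.
Proof.
  intros HF eps. destruct (HF x y z t eps (cond_pos eps)) as [d [Hd Hd']].
  exists (mkposreal d Hd). intros u v Hu Hv. simpl in *. apply Hd'; auto; rewrite Rminus_eq_0, Rabs_R0; auto.
Qed.
Lemma c2d_ty (H : R -> R -> R -> R) x y t : cont3 H -> continuity_2d_pt (fun s y => H x y s) t y.
Proof.
  intros HF eps. destruct (HF x y t eps (cond_pos eps)) as [d [Hd Hd']].
  exists (mkposreal d Hd). intros u v Hu Hv. simpl in *. apply Hd'; auto; rewrite Rminus_eq_0, Rabs_R0; auto.
Qed.
Lemma c2d_xy (H : R -> R -> R -> R) x y t : cont3 H -> continuity_2d_pt (fun s y => H s y t) x y.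
Proof.
  intros HF eps. destruct (HF x y t eps (cond_pos eps)) as [d [Hd Hd']].
  exists (mkposreal d Hd). intros u v Hu Hv. simpl in *. apply Hd'; auto; rewrite Rminus_eq_0, Rabs_R0; auto.
Qed.
Lemma c2d_tx (K : R -> R -> R) x t : cont2 K -> continuity_2d_pt (fun s x => K x s) t x.
Proof.
  intros HF eps. destruct (HF x t eps (cond_pos eps)) as [d [Hd Hd']].
  exists (mkposreal d Hd). intros u v Hu Hv. simpl in *. apply Hd'; auto.
Qed.
Lemma cont3_cy (H : R -> R -> R -> R) x y t : cont3 H -> continuous (fun s => H x s t) y.
Proof.
  intros HF. apply cont_of_eps. intros eps He. destruct (HF x y t eps He) as [d [Hd Hd']].
  exists d; split; auto. intros s Hs. apply Hd'; auto; rewrite Rminus_eq_0, Rabs_R0; auto.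
Qed.
Lemma cont2_cx (K : R -> R -> R) x t : cont2 K -> continuous (fun s => K s t) x.
Proof.
  intros HF. apply cont_of_eps. intros eps He. destruct (HF x t eps He) as [d [Hd Hd']].
  exists d; split; auto. intros s Hs. apply Hd'; auto; rewrite Rminus_eq_0, Rabs_R0; auto.
Qed.

Lemma c2d_cont (f : R -> R -> R) s z : continuity_2d_pt f s z -> continuous (f s) z.
Proof.
  intros H. apply cont_of_eps. intros eps He. destruct (H (mkposreal eps He)) as [d Hd].
  exists d. split. apply cond_pos. intros y Hy. apply Hd; auto. rewrite Rminus_eq_0, Rabs_R0. apply cond_pos.
Qed.

Lemma ex_RInt_cR (f : R -> R) a b : (forall z, Rmin a b <= z <= Rmax a b -> continuous f z) -> ex_RInt f a b.
Proof. intros H. apply (@ex_RInt_continuous R_CompleteNormedModule). exact H. Qed.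

Lemma param_deriv (f df : R -> R -> R) a b x :
  (forall s z, is_derive (fun u => f u z) s (df s z)) ->
  (forall s z, continuity_2d_pt f s z) ->
  (forall s z, continuity_2d_pt df s z) ->
  is_derive (fun s => RInt (f s) a b) x (RInt (df x) a b).
Proof.
  intros Hd Hc Hdc.
  assert (E : (fun u v => Derive (fun w => f w v) u) = df).
  { apply functional_extensionality; intros u. apply functional_extensionality; intros v.
    apply is_derive_unique. apply Hd. }
  assert (E2 : RInt (df x) a b = RInt (fun t => Derive (fun u => f u t) x) a b).
  { apply RInt_ext. intros. symmetry. apply is_derive_unique, Hd. }
  rewrite E2.
  apply (is_derive_RInt_param f a b x).
  - exists (mkposreal 1 Rlt_0_1). intros. eexists; apply Hd.
  - intros t _. rewrite E. apply Hdc.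
  - exists (mkposreal 1 Rlt_0_1). intros y _. apply ex_RInt_cR.
    intros z _. apply c2d_cont, Hc.
Qed.

Lemma cont3_RInt (G : field4) a b : a <= b -> cont4 G ->
  cont3 (fun x y t => RInt (fun z => G x y z t) a b).
Proof.
  intros Hab HG x y t eps He.
  set (N := fun d (q : R * R * R) => Rabs (fst (fst q) - x) < d /\ Rabs (snd (fst q) - y) < d /\ Rabs (snd q - t) < d).
  destruct (param_cont (R*R*R) N (x,y,t) (fun q z => G (fst (fst q)) (snd (fst q)) z (snd q)) a b Hab)
     with (eps := eps) as [d [Hd Hd']]; auto.
  - intros d Hd. unfold N; simpl. rewrite !Rminus_eq_0, Rabs_R0. auto.
  - intros d1 d2 p Hle [H1 [H2 H3]]. unfold N. lra.
  - intros z _ e He0. destruct (HG x y z t e He0) as [d [Hd Hd']].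
    exists d; split; auto. intros [[x' y'] t'] z' [H1 [H2 H3]] Hz. simpl in *. apply Hd'; auto.
  - intros [[x' y'] t']. simpl. apply ex_RInt_cR. intros. apply cont4_cz; auto.
  - exists d. split; auto. intros x' y' t' H1 H2 H3. apply (Hd' (x',y',t')). unfold N; simpl; auto.
Qed.

Lemma cont2_RInt (H : R -> R -> R -> R) a b : a <= b -> cont3 H ->
  cont2 (fun x t => RInt (fun y => H x y t) a b).
Proof.
  intros Hab HH.
  assert (HG : cont4 (fun x _ y t => H x y t)).
  { intros x d y t eps He. destruct (HH x y t eps He) as [e [He0 He']]. exists e; split; auto. }
  pose proof (cont3_RInt (fun x _ y t => H x y t) a b Hab HG) as C.
  intros x t eps He. destruct (C x 0 t eps He) as [d [Hd Hd']]. exists d; split; auto.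
  intros x' t' H1 H2. apply (Hd' x' 0 t'); auto. rewrite Rminus_eq_0, Rabs_R0; auto.
Qed.

Definition J1 (F : field4) x y t := RInt (fun z => F x y z t) (-1) 1.
Definition J2 (b : R) (F : field4) x t := RInt (fun y => J1 F x y t) 0 (2*PI/b).
Definition J3 (a b : R) (F : field4) t := RInt (fun x => J2 b F x t) 0 (2*PI/a).

Definition exdx (F : field4) := forall x y z t, ex_derive (fun s => F s y z t) x.
Definition exdy (F : field4) := forall x y z t, ex_derive (fun s => F x s z t) y.
Definition exdz (F : field4) := forall x y z t, ex_derive (fun s => F x y s t) z.
Definition exdt (F : field4) := forall x y z t, ex_derive (fun s => F x y z s) t.

Lemma Lpos a : 0 < a -> 0 < 2*PI/a.
Proof. intros. apply Rdiv_lt_0_compat; auto. pose proof PI_RGT_0. lra. Qed.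

Lemma RInt_zero a b : RInt (fun _ => 0) a b = 0.
Proof. rewrite RInt_const. unfold scal; simpl. unfold mult; simpl. ring. Qed.

Lemma J1_cont F : cont4 F -> cont3 (J1 F).
Proof. intros. apply cont3_RInt; auto; lra. Qed.
Lemma J2_cont b F : 0 < b -> cont4 F -> cont2 (J2 b F).
Proof. intros. apply cont2_RInt. left; apply Lpos; auto. apply J1_cont; auto. Qed.

Lemma exJ0 F x y t a0 b0 : cont4 F -> ex_RInt (fun z => F x y z t) a0 b0.
Proof. intros. apply ex_RInt_cR. intros. apply cont4_cz; auto. Qed.
Lemma exJ1 F x t a0 b0 : cont4 F -> ex_RInt (fun y => J1 F x y t) a0 b0.
Proof. intros. apply ex_RInt_cR. intros. apply cont3_cy. apply J1_cont; auto. Qed.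
Lemma exJ2 b F t a0 b0 : 0 < b -> cont4 F -> ex_RInt (fun x => J2 b F x t) a0 b0.
Proof. intros. apply ex_RInt_cR. intros. apply cont2_cx. apply J2_cont; auto. Qed.

Lemma J1_dt F : exdt F -> cont4 F -> cont4 (dt F) -> forall x y t,
  is_derive (fun s => J1 F x y s) t (J1 (dt F) x y t).
Proof.
  intros He HF HdF x y t. unfold J1.
  apply (param_deriv (fun s z => F x y z s) (fun s z => dt F x y z s)).
  - intros. apply Derive_correct. apply He.
  - intros. apply c2d_tz; auto.
  - intros. apply c2d_tz; auto.
Qed.
Lemma J2_dt b F : 0 < b -> exdt F -> cont4 F -> cont4 (dt F) -> forall x t,
  is_derive (fun s => J2 b F x s) t (J2 b (dt F) x t).
Proof.
  intros Hb He HF HdF x t. unfold J2.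
  apply (param_deriv (fun s y => J1 F x y s) (fun s y => J1 (dt F) x y s)).
  - intros. apply J1_dt; auto.
  - intros. apply c2d_ty. apply J1_cont; auto.
  - intros. apply c2d_ty. apply J1_cont; auto.
Qed.
Lemma J3_dt a b F : 0 < a -> 0 < b -> exdt F -> cont4 F -> cont4 (dt F) -> forall t,
  is_derive (J3 a b F) t (J3 a b (dt F) t).
Proof.
  intros Ha Hb He HF HdF t. unfold J3.
  apply (param_deriv (fun s x => J2 b F x s) (fun s x => J2 b (dt F) x s)).
  - intros. apply J2_dt; auto.
  - intros. apply c2d_tx. apply J2_cont; auto.
  - intros. apply c2d_tx. apply J2_cont; auto.
Qed.
Lemma J1_dx F : exdx F -> cont4 F -> cont4 (dx F) -> forall x y t,
  is_derive (fun s => J1 F s y t) x (J1 (dx F) x y t).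
Proof.
  intros He HF HdF x y t. unfold J1.
  apply (param_deriv (fun s z => F s y z t) (fun s z => dx F s y z t)).
  - intros. apply Derive_correct. apply He.
  - intros. apply c2d_xz; auto.
  - intros. apply c2d_xz; auto.
Qed.
Lemma J2_dx b F : exdx F -> cont4 F -> cont4 (dx F) -> forall x t,
  is_derive (fun s => J2 b F s t) x (J2 b (dx F) x t).
Proof.
  intros He HF HdF x t. unfold J2.
  apply (param_deriv (fun s y => J1 F s y t) (fun s y => J1 (dx F) s y t)).
  - intros. apply J1_dx; auto.
  - intros. apply c2d_xy. apply J1_cont; auto.
  - intros. apply c2d_xy. apply J1_cont; auto.
Qed.
Lemma J1_dy F : exdy F -> cont4 F -> cont4 (dy F) -> forall x y t,
  is_derive (fun s => J1 F x s t) y (J1 (dy F) x y t).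
Proof.
  intros He HF HdF x y t. unfold J1.
  apply (param_deriv (fun s z => F x s z t) (fun s z => dy F x s z t)).
  - intros. apply Derive_correct. apply He.
  - intros. apply c2d_yz; auto.
  - intros. apply c2d_yz; auto.
Qed.

Lemma Vx a b G t : 0 < a -> 0 < b -> exdx G -> cont4 G -> cont4 (dx G) ->
  (forall x y z t, G (x + 2*PI/a) y z t = G x y z t) -> J3 a b (dx G) t = 0.
Proof.
  intros Ha Hb He HG HdG Hp. unfold J3.
  assert (ED : (fun x => J2 b (dx G) x t) = Derive (fun s => J2 b G s t)).
  { apply functional_extensionality; intros x. symmetry. apply is_derive_unique. apply J2_dx; auto. }
  rewrite ED. rewrite RInt_Derive.
  - replace (J2 b G (2*PI/a) t) with (J2 b G 0 t). apply Rminus_diag_eq; reflexivity.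
    unfold J2, J1. apply RInt_ext; intros y _. apply RInt_ext; intros z _.
    rewrite <- (Rplus_0_l (2*PI/a)). symmetry. apply Hp.
  - intros. eexists. apply J2_dx; auto.
  - intros. rewrite <- ED. apply cont2_cx. apply J2_cont; auto.
Qed.

Lemma Vy a b G t : 0 < a -> 0 < b -> exdy G -> cont4 G -> cont4 (dy G) ->
  (forall x y z t, G x (y + 2*PI/b) z t = G x y z t) -> J3 a b (dy G) t = 0.
Proof.
  intros Ha Hb He HG HdG Hp. unfold J3.
  transitivity (RInt (fun _ => 0) 0 (2*PI/a)); [|apply RInt_zero]. apply RInt_ext. intros x _. unfold J2.
  assert (ED : (fun y => J1 (dy G) x y t) = Derive (fun s => J1 G x s t)).
  { apply functional_extensionality; intros y. symmetry. apply is_derive_unique. apply J1_dy; auto. }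
  rewrite ED. rewrite RInt_Derive.
  - replace (J1 G x (2*PI/b) t) with (J1 G x 0 t). apply Rminus_diag_eq; reflexivity.
    unfold J1. apply RInt_ext; intros z _.
    rewrite <- (Rplus_0_l (2*PI/b)). symmetry. apply Hp.
  - intros. eexists. apply J1_dy; auto.
  - intros. rewrite <- ED. apply cont3_cy. apply J1_cont; auto.
Qed.

Lemma Vz a b G t : (forall x y z, ex_derive (fun s => G x y s t) z) -> cont4 (dz G) ->
  (forall x y, G x y 1 t = 0 /\ G x y (-1) t = 0) -> J3 a b (dz G) t = 0.
Proof.
  intros He HdG Hb. unfold J3.
  transitivity (RInt (fun _ => 0) 0 (2*PI/a)); [|apply RInt_zero]. apply RInt_ext. intros x _. unfold J2.
  transitivity (RInt (fun _ => 0) 0 (2*PI/b)); [|apply RInt_zero]. apply RInt_ext. intros y _. unfold J1, dz.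
  rewrite (RInt_Derive (fun s => G x y s t)).
  - destruct (Hb x y) as [H1 H2]. rewrite H1, H2. apply Rminus_diag_eq; reflexivity.
  - intros; apply He.
  - intros. apply (cont4_cz (dz G)); auto.
Qed.

Lemma J3_plus a b F G t : 0 < a -> 0 < b -> cont4 F -> cont4 G ->
  J3 a b (fun x y z t => F x y z t + G x y z t) t = J3 a b F t + J3 a b G t.
Proof.
  intros Ha Hb HF HG. unfold J3. rewrite <- RInt_plusR; try apply exJ2; auto.
  apply RInt_ext; intros x _. unfold J2. rewrite <- RInt_plusR; try apply exJ1; auto.
  apply RInt_ext; intros y _. unfold J1. apply RInt_plusR; apply exJ0; auto.
Qed.
Lemma J3_minus a b F G t : 0 < a -> 0 < b -> cont4 F -> cont4 G ->
  J3 a b (fun x y z t => F x y z t - G x y z t) t = J3 a b F t - J3 a b G t.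
Proof.
  intros Ha Hb HF HG. unfold J3. rewrite <- RInt_minusR; try apply exJ2; auto.
  apply RInt_ext; intros x _. unfold J2. rewrite <- RInt_minusR; try apply exJ1; auto.
  apply RInt_ext; intros y _. unfold J1. apply RInt_minusR; apply exJ0; auto.
Qed.
Lemma J3_scal a b c F t : 0 < a -> 0 < b -> cont4 F ->
  J3 a b (fun x y z t => c * F x y z t) t = c * J3 a b F t.
Proof.
  intros Ha Hb HF. unfold J3. rewrite <- RInt_scalR; try apply exJ2; auto.
  apply RInt_ext; intros x _. unfold J2. rewrite <- RInt_scalR; try apply exJ1; auto.
  apply RInt_ext; intros y _. unfold J1. apply RInt_scalR; apply exJ0; auto.
Qed.
Lemma J3_ext a b F G t : 0 < a -> 0 < b ->
  (forall x y z, -1 < z < 1 -> F x y z t = G x y z t) -> J3 a b F t = J3 a b G t.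
Proof.
  intros Ha Hb H. unfold J3. apply RInt_ext; intros x _. unfold J2.
  apply RInt_ext; intros y _. unfold J1. apply RInt_ext. intros z Hz.
  rewrite Rmin_left in Hz by lra. rewrite Rmax_right in Hz by lra. auto.
Qed.
Lemma J3_le a b F G t : 0 < a -> 0 < b -> cont4 F -> cont4 G ->
  (forall x y z, -1 < z < 1 -> F x y z t <= G x y z t) -> J3 a b F t <= J3 a b G t.
Proof.
  intros Ha Hb HF HG H. unfold J3. apply RInt_le; try apply exJ2; auto. left; apply Lpos; auto.
  intros x _. unfold J2. apply RInt_le; try apply exJ1; auto. left; apply Lpos; auto.
  intros y _. unfold J1. apply RInt_le; try apply exJ0; auto. lra.
Qed.
Lemma J3_zero a b t : J3 a b (fun _ _ _ _ => 0) t = 0.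
Proof.
  unfold J3. transitivity (RInt (fun _ => 0) 0 (2*PI/a)); [|apply RInt_zero]. apply RInt_ext. intros x _. unfold J2.
  transitivity (RInt (fun _ => 0) 0 (2*PI/b)); [|apply RInt_zero]. apply RInt_ext. intros y _. unfold J1. apply RInt_zero.
Qed.
Lemma J3_nonneg a b F t : 0 < a -> 0 < b -> cont4 F ->
  (forall x y z, -1 < z < 1 -> 0 <= F x y z t) -> 0 <= J3 a b F t.
Proof.
  intros. rewrite <- (J3_zero a b t). apply J3_le; auto. apply cont4_const.
Qed.

Lemma isd_plus (f g : R -> R) x df dg : is_derive f x df -> is_derive g x dg ->
  is_derive (fun s => f s + g s) x (df + dg).
Proof. intros. apply (is_derive_plus f g x df dg); auto. Qed.
Lemma isd_m2 (c : R) (f g : R -> R) x df dg : is_derive f x df -> is_derive g x dg ->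
  is_derive (fun s => c * f s * g s) x (c * df * g x + c * f x * dg).
Proof.
  intros Hf Hg.
  exact (is_derive_mult (fun s => c * f s) g x (c * df) dg (is_derive_scal f x c df Hf) Hg (fun a b => Rmult_comm a b)).
Qed.
Lemma isd_m3 (c : R) (f g h : R -> R) x df dg dh : is_derive f x df -> is_derive g x dg -> is_derive h x dh ->
  is_derive (fun s => c * f s * g s * h s) x (c * df * g x * h x + c * f x * dg * h x + c * f x * g x * dh).
Proof.
  intros Hf Hg Hh.
  pose proof (is_derive_mult (fun s => c * f s * g s) h x (c * df * g x + c * f x * dg) dh (isd_m2 c f g x df dg Hf Hg) Hh (fun a b => Rmult_comm a b)) as H.
  replace (c * df * g x * h x + c * f x * dg * h x + c * f x * g x * dh) with
   (plus (mult (c * df * g x + c * f x * dg) (h x)) (mult (c * f x * g x) dh)). exact H.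
  unfold plus, mult; simpl. ring.
Qed.

Ltac solve_term := match goal with
  | |- is_derive (fun s => ?c * @?f s * @?g s * @?h s) ?x _ => apply (isd_m3 c f g h x)
  | |- is_derive (fun s => ?c * @?f s * @?g s) ?x _ => apply (isd_m2 c f g x)
  end; apply Derive_correct; auto.
Ltac split_plus := match goal with
  | |- is_derive (fun s => @?f s + @?g s) ?x _ => apply (isd_plus f g x)
  end.
Definition Fx (U B : R -> R) (A Rm Re : R) (u v w h k l p : field4) : field4 := fun x y z t =>
  (-(1/2)) * U z * u x y z t * u x y z t + (-(1/2)) * U z * v x y z t * v x y z t + (-(1/2)) * U z * w x y z t * w x y z t + (-(A/2)) * U z * h x y z t * h x y z t + (-(A/2)) * U z * k x y z t * k x y z t + (-(A/2)) * U z * l x y z t * l x y z t + (A) * B z * u x y z t * h x y z t + (A) * B z * v x y z t * k x y z t + (A) * B z * w x y z t * l x y z t + (-(1/2)) * u x y z t * u x y z t * u x y z t + (-(1/2)) * u x y z t * v x y z t * v x y z t + (-(1/2)) * u x y z t * w x y z t * w x y z t + (-(A/2)) * u x y z t * h x y z t * h x y z t + (-(A/2)) * u x y z t * k x y z t * k x y z t + (-(A/2)) * u x y z t * l x y z t * l x y z t + (A) * h x y z t * u x y z t * h x y z t + (A) * h x y z t * v x y z t * k x y z t + (A) * h x y z t * w x y z t * l x y z t + (-1) * u x y z t * p x y z t + (/Re) * u x y z t * dx u x y z t + (/Re) * v x y z t * dx v x y z t + (/Re) * w x y z t * dx w x y z t + (A/Rm) * h x y z t * dx h x y z t + (A/Rm)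 * k x y z t * dx k x y z t + (A/Rm) * l x y z t * dx l x y z t.

Definition Fy (U B : R -> R) (A Rm Re : R) (u v w h k l p : field4) : field4 := fun x y z t =>
  (-(1/2)) * v x y z t * u x y z t * u x y z t + (-(1/2)) * v x y z t * v x y z t * v x y z t + (-(1/2)) * v x y z t * w x y z t * w x y z t + (-(A/2)) * v x y z t * h x y z t * h x y z t + (-(A/2)) * v x y z t * k x y z t * k x y z t + (-(A/2)) * v x y z t * l x y z t * l x y z t + (A) * k x y z t * u x y z t * h x y z t + (A) * k x y z t * v x y z t * k x y z t + (A) * k x y z t * w x y z t * l x y z t + (-1) * v x y z t * p x y z t + (/Re) * u x y z t * dy u x y z t + (/Re) * v x y z t * dy v x y z t + (/Re) * w x y z t * dy w x y z t + (A/Rm) * h x y z t * dy h x y z t + (A/Rm) * k x y z t * dy k x y z t + (A/Rm) * l x y z t * dy l x y z t.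

Definition Fz (U B : R -> R) (A Rm Re : R) (u v w h k l p : field4) : field4 := fun x y z t =>
  (A/Rm) * u x y z t * h x y z t + (A/Rm) * v x y z t * k x y z t + (A/Rm) * w x y z t * l x y z t + (-(1/2)) * w x y z t * u x y z t * u x y z t + (-(1/2)) * w x y z t * v x y z t * v x y z t + (-(1/2)) * w x y z t * w x y z t * w x y z t + (-(A/2)) * w x y z t * h x y z t * h x y z t + (-(A/2)) * w x y z t * k x y z t * k x y z t + (-(A/2)) * w x y z t * l x y z t * l x y z t + (A) * l x y z t * u x y z t * h x y z t + (A) * l x y z t * v x y z t * k x y z t + (A) * l x y z t * w x y z t * l x y z t + (-1) * w x y z t * p x y z t + (/Re) * u x y z t * dz u x y z t + (/Re) * v x y z t * dz v x y z t + (/Re) * w x y z t * dz w x y z t + (A/Rm) * h x y z t * dz h x y z t + (A/Rm) * k x y z t * dz k x y z t + (A/Rm) * l x y z t * dz l x y z t.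

Definition DFx (U B : R -> R) (A Rm Re : R) (u v w h k l p : field4) : field4 := fun x y z t =>
  ((-(1/2)) * U z * dx u x y z t * u x y z t + (-(1/2)) * U z * u x y z t * dx u x y z t) + ((-(1/2)) * U z * dx v x y z t * v x y z t + (-(1/2)) * U z * v x y z t * dx v x y z t) + ((-(1/2)) * U z * dx w x y z t * w x y z t + (-(1/2)) * U z * w x y z t * dx w x y z t) + ((-(A/2)) * U z * dx h x y z t * h x y z t + (-(A/2)) * U z * h x y z t * dx h x y z t) + ((-(A/2)) * U z * dx k x y z t * k x y z t + (-(A/2)) * U z * k x y z t * dx k x y z t) + ((-(A/2)) * U z * dx l x y z t * l x y z t + (-(A/2)) * U z * l x y z t * dx l x y z t) + ((A) * B z * dx u x y z t * h x y z t + (A) * B z * u x y z t * dx h x y z t) + ((A) * B z * dx v x y z t * k x y z t + (A) * B z * v x y z t * dx k x y z t) + ((A) * B z * dx w x y z t * l x y z t + (A) * B z * w x y z t * dx l x y z t) + ((-(1/2)) * dx u x y z t * u x y z t * u x y z t + (-(1/2)) * u x y z t * dx u x y z t * u x y z t + (-(1/2)) * u x y z t * u x y z t * dx u x y z t) + ((-(1/2)) * dx u x y z t * v x y z t * v x y z t + (-(1/2)) * u x y z t * dx v x y z t * v x y z t + (-(1/2)) * u x y z t * v x y z t * dx v x y z t) + ((-(1/2)) * dx u x y z t * w x y z t * w x y z t + (-(1/2)) * u x y z t * dx w x y z t * w x y z t + (-(1/2)) * u x y z t * w x y z t * dx w x y z t) + ((-(A/2)) * dx u x y z t * h x y z t *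 h x y z t + (-(A/2)) * u x y z t * dx h x y z t * h x y z t + (-(A/2)) * u x y z t * h x y z t * dx h x y z t) + ((-(A/2)) * dx u x y z t * k x y z t * k x y z t + (-(A/2)) * u x y z t * dx k x y z t * k x y z t + (-(A/2)) * u x y z t * k x y z t * dx k x y z t) + ((-(A/2)) * dx u x y z t * l x y z t * l x y z t + (-(A/2)) * u x y z t * dx l x y z t * l x y z t + (-(A/2)) * u x y z t * l x y z t * dx l x y z t) + ((A) * dx h x y z t * u x y z t * h x y z t + (A) * h x y z t * dx u x y z t * h x y z t + (A) * h x y z t * u x y z t * dx h x y z t) + ((A) * dx h x y z t * v x y z t * k x y z t + (A) * h x y z t * dx v x y z t * k x y z t + (A) * h x y z t * v x y z t * dx k x y z t) + ((A) * dx h x y z t * w x y z t * l x y z t + (A) * h x y z t * dx w x y z t * l x y z t + (A) * h x y z t * w x y z t * dx l x y z t) + ((-1) * dx u x y z t * p x y z t + (-1) * u x y z t * dx p x y z t) + ((/Re) * dx u x y z t * dx u x y z t + (/Re) * u x y z t * dx (dx u) x y z t) + ((/Re) * dx v x y z t * dx v x y z t + (/Re) * v x y z t * dx (dx v) x y z t) + ((/Re) * dx w x y z t * dx w x y z t + (/Re) * w x y z t * dx (dx w) x y z t) + ((A/Rm) * dx h x y z t * dx h x y z t + (A/Rm) * h x y z t * dx (dx h) x y z t) + ((A/Rm) * dx k x y z t * dx k x y z t + (A/Rm) * k x y z t * dx (dx k) x y z t) + ((A/Rm) * dx l x y z t * dx l x y z t + (A/Rm) * l x y z t * dx (dx l)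 x y z t).

Definition DFy (U B : R -> R) (A Rm Re : R) (u v w h k l p : field4) : field4 := fun x y z t =>
  ((-(1/2)) * dy v x y z t * u x y z t * u x y z t + (-(1/2)) * v x y z t * dy u x y z t * u x y z t + (-(1/2)) * v x y z t * u x y z t * dy u x y z t) + ((-(1/2)) * dy v x y z t * v x y z t * v x y z t + (-(1/2)) * v x y z t * dy v x y z t * v x y z t + (-(1/2)) * v x y z t * v x y z t * dy v x y z t) + ((-(1/2)) * dy v x y z t * w x y z t * w x y z t + (-(1/2)) * v x y z t * dy w x y z t * w x y z t + (-(1/2)) * v x y z t * w x y z t * dy w x y z t) + ((-(A/2)) * dy v x y z t * h x y z t * h x y z t + (-(A/2)) * v x y z t * dy h x y z t * h x y z t + (-(A/2)) * v x y z t * h x y z t * dy h x y z t) + ((-(A/2)) * dy v x y z t * k x y z t * k x y z t + (-(A/2)) * v x y z t * dy k x y z t * k x y z t + (-(A/2)) * v x y z t * k x y z t * dy k x y z t) + ((-(A/2)) * dy v x y z t * l x y z t * l x y z t + (-(A/2)) * v x y z t * dy l x y z t * l x y z t + (-(A/2)) * v x y z t * l x y z t * dy l x y z t) + ((A) * dy k x y z t * u x y z t * h x y z t + (A) * k x y z t * dy u x y z t * h x y z t + (A) * k x y z t * u x y z t * dy h x y z t) + ((A) * dy k x y z t * v x y z t * k x y z t + (A) * k x y z t * dy v x y z t * k x y z t + (A) * k x y z t * v x y z t * dy k x y z t) + ((A) * dy k x y z t * w x y z t * l x y z t + (A) * k x y z t * dy w x y z t * l x y z t + (A) * k x y z t *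 w x y z t * dy l x y z t) + ((-1) * dy v x y z t * p x y z t + (-1) * v x y z t * dy p x y z t) + ((/Re) * dy u x y z t * dy u x y z t + (/Re) * u x y z t * dy (dy u) x y z t) + ((/Re) * dy v x y z t * dy v x y z t + (/Re) * v x y z t * dy (dy v) x y z t) + ((/Re) * dy w x y z t * dy w x y z t + (/Re) * w x y z t * dy (dy w) x y z t) + ((A/Rm) * dy h x y z t * dy h x y z t + (A/Rm) * h x y z t * dy (dy h) x y z t) + ((A/Rm) * dy k x y z t * dy k x y z t + (A/Rm) * k x y z t * dy (dy k) x y z t) + ((A/Rm) * dy l x y z t * dy l x y z t + (A/Rm) * l x y z t * dy (dy l) x y z t).

Definition DFz (U B : R -> R) (A Rm Re : R) (u v w h k l p : field4) : field4 := fun x y z t =>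
  ((A/Rm) * dz u x y z t * h x y z t + (A/Rm) * u x y z t * dz h x y z t) + ((A/Rm) * dz v x y z t * k x y z t + (A/Rm) * v x y z t * dz k x y z t) + ((A/Rm) * dz w x y z t * l x y z t + (A/Rm) * w x y z t * dz l x y z t) + ((-(1/2)) * dz w x y z t * u x y z t * u x y z t + (-(1/2)) * w x y z t * dz u x y z t * u x y z t + (-(1/2)) * w x y z t * u x y z t * dz u x y z t) + ((-(1/2)) * dz w x y z t * v x y z t * v x y z t + (-(1/2)) * w x y z t * dz v x y z t * v x y z t + (-(1/2)) * w x y z t * v x y z t * dz v x y z t) + ((-(1/2)) * dz w x y z t * w x y z t * w x y z t + (-(1/2)) * w x y z t * dz w x y z t * w x y z t + (-(1/2)) * w x y z t * w x y z t * dz w x y z t) + ((-(A/2)) * dz w x y z t * h x y z t * h x y z t + (-(A/2)) * w x y z t * dz h x y z t * h x y z t + (-(A/2)) * w x y z t * h x y z t * dz h x y z t) + ((-(A/2)) * dz w x y z t * k x y z t * k x y z t + (-(A/2)) * w x y z t * dz k x y z t * k x y z t + (-(A/2)) * w x y z t * k x y z t * dz k x y z t) + ((-(A/2)) * dz w x y z t * l x y z t * l x y z t + (-(A/2)) * w x y z t * dz l x y z t * l x y z t + (-(A/2)) * w x y z t * l x y z t * dz l x y z t) + ((A) * dz l x y z t * u x y z t * h x y z t + (A) * l x y z t * dz u x y z t * h x y z t + (A) * l x y z t * u x y z t * dz h x y z t) + ((A) * dz l x y z t * v x y z t * k x y z t + (A) * l x y z t * dz v x y z t * k x y z t + (A)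 * l x y z t * v x y z t * dz k x y z t) + ((A) * dz l x y z t * w x y z t * l x y z t + (A) * l x y z t * dz w x y z t * l x y z t + (A) * l x y z t * w x y z t * dz l x y z t) + ((-1) * dz w x y z t * p x y z t + (-1) * w x y z t * dz p x y z t) + ((/Re) * dz u x y z t * dz u x y z t + (/Re) * u x y z t * dz (dz u) x y z t) + ((/Re) * dz v x y z t * dz v x y z t + (/Re) * v x y z t * dz (dz v) x y z t) + ((/Re) * dz w x y z t * dz w x y z t + (/Re) * w x y z t * dz (dz w) x y z t) + ((A/Rm) * dz h x y z t * dz h x y z t + (A/Rm) * h x y z t * dz (dz h) x y z t) + ((A/Rm) * dz k x y z t * dz k x y z t + (A/Rm) * k x y z t * dz (dz k) x y z t) + ((A/Rm) * dz l x y z t * dz l x y z t + (A/Rm) * l x y z t * dz (dz l) x y z t).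

Lemma energy_identity_abs (A Rm Re Bz Uz dBz dUz h ht hx hxx hy hyy hz hzz k kt kx kxx ky kyy kz kzz l lt lx lxx ly lyy lz lzz p px py pz u ut ux uxx uy uyy uz uzz v vt vx vxx vy vyy vz vzz w wt wx wxx wy wyy wz wzz : R) :
  Re <> 0 -> Rm <> 0 ->
  ut + Uz * ux + w * dUz + (u * ux + v * uy + w * uz) = A * (Bz * hx + hz / Rm + l * dBz + (h * hx + k * hy + l * hz)) - px + (uxx + uyy + uzz) / Re ->
  vt + Uz * vx + (u * vx + v * vy + w * vz) = A * (Bz * kx + kz / Rm + (h * kx + k * ky + l * kz)) - py + (vxx + vyy + vzz) / Re ->
  wt + Uz * wx + (u * wx + v * wy + w * wz) = A * (Bz * lx + lz / Rm + (h * lx + k * ly + l * lz)) - pz + (wxx + wyy + wzz) / Re ->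
  ht + w * dBz + Uz * hx + (u * hx + v * hy + w * hz) - Bz * ux - uz / Rm - l * dUz - (h * ux + k * uy + l * uz) = (hxx + hyy + hzz) / Rm ->
  kt + Uz * kx + (u * kx + v * ky + w * kz) - Bz * vx - vz / Rm - (h * vx + k * vy + l * vz) = (kxx + kyy + kzz) / Rm ->
  lt + Uz * lx + (u * lx + v * ly + w * lz) - Bz * wx - wz / Rm - (h * wx + k * wy + l * wz) = (lxx + lyy + lzz) / Rm ->
  ux + vy + wz = 0 ->
  hx + ky + lz = 0 ->
  u * ut + v * vt + w * wt + A * (h * ht + k * kt + l * lt) =
  (- (dUz * w * u) + A * (l * dBz * u - w * dBz * h + l * dUz * h)) - (((ux ^ 2 + uy ^ 2 + uz ^ 2) + (vx ^ 2 + vy ^ 2 + vz ^ 2) + (wx ^ 2 + wy ^ 2 + wz ^ 2)) / Re + A / Rm * ((hx ^ 2 + hy ^ 2 + hz ^ 2) + (kx ^ 2 + ky ^ 2 + kz ^ 2) + (lx ^ 2 + ly ^ 2 + lz ^ 2))) + (((-(1/2)) * Uz * ux * u + (-(1/2)) * Uz * u * ux) + ((-(1/2)) * Uz * vx * v + (-(1/2)) * Uz * v * vx) + ((-(1/2)) * Uz * wx * w + (-(1/2)) * Uz * w * wx) + ((-(A/2)) * Uz * hx * h + (-(A/2)) * Uz * h * hx) + ((-(A/2)) * Uz * kx * k + (-(A/2)) * Uz * k * kx) + ((-(A/2)) * Uz * lx * l + (-(A/2)) * Uz * l * lx) + ((A) * Bz * ux * h + (A) * Bz * u * hx) + ((A)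 * Bz * vx * k + (A) * Bz * v * kx) + ((A) * Bz * wx * l + (A) * Bz * w * lx) + ((-(1/2)) * ux * u * u + (-(1/2)) * u * ux * u + (-(1/2)) * u * u * ux) + ((-(1/2)) * ux * v * v + (-(1/2)) * u * vx * v + (-(1/2)) * u * v * vx) + ((-(1/2)) * ux * w * w + (-(1/2)) * u * wx * w + (-(1/2)) * u * w * wx) + ((-(A/2)) * ux * h * h + (-(A/2)) * u * hx * h + (-(A/2)) * u * h * hx) + ((-(A/2)) * ux * k * k + (-(A/2)) * u * kx * k + (-(A/2)) * u * k * kx) + ((-(A/2)) * ux * l * l + (-(A/2)) * u * lx * l + (-(A/2)) * u * l * lx) + ((A) * hx * u * h + (A) * h * ux * h + (A) * h * u * hx) + ((A) * hx * v * k + (A) * h * vx * k + (A) * h * v * kx) + ((A) * hx * w * l + (A) * h * wx * l + (A) * h * w * lx) + ((-1) * ux * p + (-1) * u * px) + ((/Re) * ux * ux + (/Re) * u * uxx) + ((/Re) * vx * vx + (/Re) * v * vxx) + ((/Re) * wx * wx + (/Re) * w * wxx) + ((A/Rm) * hx * hx + (A/Rm) * h * hxx) + ((A/Rm) * kx * kx + (A/Rm) * k * kxx) + ((A/Rm) * lx * lx + (A/Rm) * l * lxx)) + (((-(1/2)) * vy * u * u + (-(1/2)) * v * uy * u + (-(1/2)) * v * u * uy) + ((-(1/2)) * vy * v * v + (-(1/2)) * v * vy * v + (-(1/2)) * v * v * vy) + ((-(1/2)) * vy * w * w + (-(1/2)) * v * wy * w + (-(1/2)) * v * w * wy) + ((-(A/2))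 * vy * h * h + (-(A/2)) * v * hy * h + (-(A/2)) * v * h * hy) + ((-(A/2)) * vy * k * k + (-(A/2)) * v * ky * k + (-(A/2)) * v * k * ky) + ((-(A/2)) * vy * l * l + (-(A/2)) * v * ly * l + (-(A/2)) * v * l * ly) + ((A) * ky * u * h + (A) * k * uy * h + (A) * k * u * hy) + ((A) * ky * v * k + (A) * k * vy * k + (A) * k * v * ky) + ((A) * ky * w * l + (A) * k * wy * l + (A) * k * w * ly) + ((-1) * vy * p + (-1) * v * py) + ((/Re) * uy * uy + (/Re) * u * uyy) + ((/Re) * vy * vy + (/Re) * v * vyy) + ((/Re) * wy * wy + (/Re) * w * wyy) + ((A/Rm) * hy * hy + (A/Rm) * h * hyy) + ((A/Rm) * ky * ky + (A/Rm) * k * kyy) + ((A/Rm) * ly * ly + (A/Rm) * l * lyy)) + (((A/Rm) * uz * h + (A/Rm) * u * hz) + ((A/Rm) * vz * k + (A/Rm) * v * kz) + ((A/Rm) * wz * l + (A/Rm) * w * lz) + ((-(1/2)) * wz * u * u + (-(1/2)) * w * uz * u + (-(1/2)) * w * u * uz) + ((-(1/2)) * wz * v * v + (-(1/2)) * w * vz * v + (-(1/2)) * w * v * vz) + ((-(1/2)) * wz * w * w + (-(1/2)) * w * wz * w + (-(1/2)) * w * w * wz) + ((-(A/2)) * wz * h * h + (-(A/2)) * w * hz * h + (-(A/2)) * w * h * hz) + ((-(A/2)) * wz * k * k + (-(A/2)) * w * kz * k + (-(A/2)) * w * k * kz) + ((-(A/2)) * wz * l * l + (-(A/2)) * w * lz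 * l + (-(A/2)) * w * l * lz) + ((A) * lz * u * h + (A) * l * uz * h + (A) * l * u * hz) + ((A) * lz * v * k + (A) * l * vz * k + (A) * l * v * kz) + ((A) * lz * w * l + (A) * l * wz * l + (A) * l * w * lz) + ((-1) * wz * p + (-1) * w * pz) + ((/Re) * uz * uz + (/Re) * u * uzz) + ((/Re) * vz * vz + (/Re) * v * vzz) + ((/Re) * wz * wz + (/Re) * w * wzz) + ((A/Rm) * hz * hz + (A/Rm) * h * hzz) + ((A/Rm) * kz * kz + (A/Rm) * k * kzz) + ((A/Rm) * lz * lz + (A/Rm) * l * lzz)).
Proof.
  intros HRe HRm E1 E2 E3 E4 E5 E6 D1 D2.
  assert (Hut : ut = - (Uz * ux + w * dUz + (u * ux + v * uy + w * uz)) + (A * (Bz * hx + hz / Rm + l * dBz + (h * hx + k * hy + l * hz)) - px + (uxx + uyy + uzz) / Re)) by lra.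
  assert (Hvt : vt = - (Uz * vx + (u * vx + v * vy + w * vz)) + (A * (Bz * kx + kz / Rm + (h * kx + k * ky + l * kz)) - py + (vxx + vyy + vzz) / Re)) by lra.
  assert (Hwt : wt = - (Uz * wx + (u * wx + v * wy + w * wz)) + (A * (Bz * lx + lz / Rm + (h * lx + k * ly + l * lz)) - pz + (wxx + wyy + wzz) / Re)) by lra.
  assert (Hht : ht = (hxx + hyy + hzz) / Rm - (w * dBz + Uz * hx + (u * hx + v * hy + w * hz) - Bz * ux - uz / Rm - l * dUz - (h * ux + k * uy + l * uz))) by lra.
  assert (Hkt : kt = (kxx + kyy + kzz) / Rm - (Uz * kx + (u * kx + v * ky + w * kz) - Bz * vx - vz / Rm - (h * vx + k * vy + l * vz))) by lra.
  assert (Hlt : lt = (lxx + lyy + lzz) / Rm - (Uz * lx + (u * lx + v * ly + w * lz) - Bz * wx - wz / Rm - (h * wx + k * wy + l * wz))) by lra.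
  assert (Hwz : wz = - ux - vy) by lra.
  assert (Hlz : lz = - hx - ky) by lra.
  rewrite Hut, Hvt, Hwt, Hht, Hkt, Hlt. rewrite Hwz, Hlz. field. auto.
Qed.

Lemma dFx_pt U B A Rm Re u v w h k l p :
  exdx u -> exdx v -> exdx w -> exdx h -> exdx k -> exdx l -> exdx p ->
  exdx (dx u) -> exdx (dx v) -> exdx (dx w) -> exdx (dx h) -> exdx (dx k) -> exdx (dx l) ->
  forall x y z t, is_derive (fun s => Fx U B A Rm Re u v w h k l p s y z t) x (DFx U B A Rm Re u v w h k l p x y z t).
Proof.
  unfold exdx. intros. unfold Fx, DFx.
  repeat (split_plus; [| solve_term]). solve_term.
Qed.
Lemma dFy_pt U B A Rm Re u v w h k l p :
  exdy u -> exdy v -> exdy w -> exdy h -> exdy k -> exdy l -> exdy p ->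
  exdy (dy u) -> exdy (dy v) -> exdy (dy w) -> exdy (dy h) -> exdy (dy k) -> exdy (dy l) ->
  forall x y z t, is_derive (fun s => Fy U B A Rm Re u v w h k l p x s z t) y (DFy U B A Rm Re u v w h k l p x y z t).
Proof.
  unfold exdy. intros. unfold Fy, DFy.
  repeat (split_plus; [| solve_term]). solve_term.
Qed.
Lemma dFz_pt U B A Rm Re u v w h k l p :
  exdz u -> exdz v -> exdz w -> exdz h -> exdz k -> exdz l -> exdz p ->
  exdz (dz u) -> exdz (dz v) -> exdz (dz w) -> exdz (dz h) -> exdz (dz k) -> exdz (dz l) ->
  forall x y z t, is_derive (fun s => Fz U B A Rm Re u v w h k l p x y s t) z (DFz U B A Rm Re u v w h k l p x y z t).
Proof.
  unfold exdz. intros. unfold Fz, DFz.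
  repeat (split_plus; [| solve_term]). solve_term.
Qed.

Lemma sinh_pos Ha : 0 < Ha -> exp Ha - exp (- Ha) <> 0.
Proof. intros. assert (exp (-Ha) < exp Ha) by (apply exp_increasing; lra). lra. Qed.
Lemma cosh_gt1 Ha : 0 < Ha -> (exp Ha + exp (- Ha)) / 2 - 1 <> 0.
Proof.
  intros H. assert (exp Ha > 1 + Ha) by (apply exp_ineq1; lra).
  assert (exp (-Ha) > 1 + - Ha) by (apply exp_ineq1; lra). lra.
Qed.

Definition zc (W : R -> R) := forall z, continuous W z.

Lemma zc_U fl Ha : 0 < Ha -> zc (Ubase fl Ha).
Proof.
  intros HHa z. apply (@ex_derive_continuous R_AbsRing R_NormedModule). pose proof (sinh_pos Ha HHa). pose proof (cosh_gt1 Ha HHa).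
  destruct fl; unfold Ubase, sinh, cosh; auto_derive; auto; lra.
Qed.
Lemma zc_B fl Ha : 0 < Ha -> zc (Bbase fl Ha).
Proof.
  intros HHa z. apply (@ex_derive_continuous R_AbsRing R_NormedModule). pose proof (sinh_pos Ha HHa). pose proof (cosh_gt1 Ha HHa).
  destruct fl; unfold Bbase, sinh, cosh; auto_derive; repeat split; auto; try lra;
  apply Rmult_integral_contrapositive; split; lra.
Qed.

Lemma zc_Derive (f g : R -> R) : (forall z, is_derive f z (g z)) -> zc g -> zc (Derive f).
Proof.
  intros Hd Hg. replace (Derive f) with g. auto.
  apply functional_extensionality. intros z. symmetry. apply is_derive_unique. auto.
Qed.

Lemma zc_dU fl Ha : 0 < Ha -> zc (dU fl Ha).
Proof.
  intros HHa. pose proof (sinh_pos Ha HHa). pose proof (cosh_gt1 Ha HHa). unfold dU. destruct fl.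
  - apply (zc_Derive _ (fun z => Ha * ((exp (Ha*z) + exp (-(Ha*z)))/2) / ((exp Ha - exp (-Ha))/2))).
    + intros z. unfold Ubase, sinh. auto_derive. auto. field; repeat split; try (intro; apply H0; lra); try (intro; apply H; lra); auto.
    + intros z. apply (@ex_derive_continuous R_AbsRing R_NormedModule). auto_derive. auto.
  - apply (zc_Derive _ (fun z => -(Ha * ((exp (Ha*z) - exp (-(Ha*z)))/2)) / ((exp Ha + exp (-Ha))/2 - 1))).
    + intros z. unfold Ubase, cosh. auto_derive. auto. field; repeat split; try (intro; apply H0; lra); try (intro; apply H; lra); auto.
    + intros z. apply (@ex_derive_continuous R_AbsRing R_NormedModule). auto_derive. auto.
Qed.

Lemma zc_dB fl Ha : 0 < Ha -> zc (dB fl Ha).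
Proof.
  intros HHa. pose proof (sinh_pos Ha HHa). pose proof (cosh_gt1 Ha HHa).
  assert (Ha <> 0) by lra. unfold dB. destruct fl.
  - apply (zc_Derive _ (fun z => -(Ha * ((exp (Ha*z) - exp (-(Ha*z)))/2)) / (Ha * ((exp Ha - exp (-Ha))/2)))).
    + intros z. unfold Bbase, sinh, cosh. auto_derive; try (apply Rmult_integral_contrapositive; split; lra); auto.
      field; repeat split; try (intro; apply H0; lra); try (intro; apply H; lra); auto.
    + intros z. apply (@ex_derive_continuous R_AbsRing R_NormedModule). auto_derive; auto.
  - apply (zc_Derive _ (fun z => (Ha * ((exp (Ha*z) + exp (-(Ha*z)))/2) - (exp Ha - exp (-Ha))/2) / (Ha * ((exp Ha + exp (-Ha))/2 - 1)))).
    + intros z. unfold Bbase, sinh, cosh. auto_derive; try (apply Rmult_integral_contrapositive; split; lra); auto.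
      field; repeat split; try (intro; apply H0; lra); try (intro; apply H; lra); auto.
    + intros z. apply (@ex_derive_continuous R_AbsRing R_NormedModule). auto_derive; auto.
Qed.


Lemma ex_of_partials f : ex_partials4 f -> exdx f /\ exdy f /\ exdz f /\ exdt f.
Proof.
  intros H. unfold exdx, exdy, exdz, exdt.
  split; [|split; [|split]]; intros x y z t; destruct (H x y z t) as [? [? [? ?]]]; auto.
Qed.

Ltac c2 H := destruct H as [[?P0 [?C0 [?Cx [?Cy [?Cz ?Ct]]]]] [[?Px [?Cx0 [?Cxx [?Cxy [?Cxz ?Cxt]]]]]
   [[?Py [?Cy0 [?Cyx [?Cyy [?Cyz ?Cyt]]]]] [[?Pz [?Cz0 [?Czx [?Czy [?Czz ?Czt]]]]] [?Pt [?Ct0 [?Ctx [?Cty [?Ctz ?Ctt]]]]]]]]].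

Ltac exall := repeat match goal with
  | H : ex_partials4 _ |- _ => destruct (ex_of_partials _ H) as [?ex [?ey [?ez ?et]]]; clear H
  end.

Definition perx a (F : field4) := forall x y z t, F (x + 2*PI/a) y z t = F x y z t.
Definition pery b (F : field4) := forall x y z t, F x (y + 2*PI/b) z t = F x y z t.


Lemma Derive_shift (f : R -> R) x c : ex_derive f (x + c) ->
  Derive (fun s => f (s + c)) x = Derive f (x + c).
Proof.
  intros H. apply is_derive_unique.
  pose proof (is_derive_comp f (fun s => s + c) x (Derive f (x + c)) 1 (Derive_correct _ _ H)) as H2.
  assert (Hd : is_derive (fun s : R => s + c) x 1).
  { apply (is_derive_ext (fun s => s + c)). auto. auto_derive; auto. }
  specialize (H2 Hd). unfold scal in H2; simpl in H2. unfold mult in H2; simpl in H2.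
  rewrite Rmult_1_l in H2. exact H2.
Qed.


Lemma perx_dx a F : perx a F -> exdx F -> perx a (dx F).
Proof.
  intros Hp He x y z t. unfold dx. rewrite <- Derive_shift by apply He.
  f_equal. apply functional_extensionality; intros s. apply Hp.
Qed.

Lemma perx_dy a F : perx a F -> perx a (dy F).
Proof. intros Hp x y z t. unfold dy. f_equal. apply functional_extensionality; intros s. apply Hp. Qed.

Lemma perx_dz a F : perx a F -> perx a (dz F).
Proof. intros Hp x y z t. unfold dz. f_equal. apply functional_extensionality; intros s. apply Hp. Qed.

Lemma perx_dt a F : perx a F -> perx a (dt F).
Proof. intros Hp x y z t. unfold dt. f_equal. apply functional_extensionality; intros s. apply Hp. Qed.

Lemma pery_dy b F : pery b F -> exdy F -> pery b (dy F).
Proof.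
  intros Hp He x y z t. unfold dy. rewrite <- Derive_shift by apply He.
  f_equal. apply functional_extensionality; intros s. apply Hp.
Qed.

Lemma pery_dx b F : pery b F -> pery b (dx F).
Proof. intros Hp x y z t. unfold dx. f_equal. apply functional_extensionality; intros s. apply Hp. Qed.

Lemma pery_dz b F : pery b F -> pery b (dz F).
Proof. intros Hp x y z t. unfold dz. f_equal. apply functional_extensionality; intros s. apply Hp. Qed.

Lemma pery_dt b F : pery b F -> pery b (dt F).
Proof. intros Hp x y z t. unfold dt. f_equal. apply functional_extensionality; intros s. apply Hp. Qed.

Definition Sq (F G H : field4) : field4 := fun x y z t => F x y z t ^ 2 + G x y z t ^ 2 + H x y z t ^ 2.


Lemma dt_Sq_pt F G H : exdt F -> exdt G -> exdt H -> forall x y z t,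
  is_derive (fun s => Sq F G H x y z s) t (2 * (F x y z t * dt F x y z t + G x y z t * dt G x y z t + H x y z t * dt H x y z t)).
Proof.
  unfold exdt. intros. unfold Sq, dt. auto_derive; auto. ring.
Qed.

Lemma dt_Sq F G H : exdt F -> exdt G -> exdt H ->
  dt (Sq F G H) = fun x y z t => 2 * (F x y z t * dt F x y z t + G x y z t * dt G x y z t + H x y z t * dt H x y z t).
Proof.
  intros. do 4 (apply functional_extensionality; intro). apply is_derive_unique. apply dt_Sq_pt; auto.
Qed.


Lemma J3_opp a b F t : 0 < a -> 0 < b -> cont4 F ->
  J3 a b (fun x y z t => - F x y z t) t = - J3 a b F t.
Proof.
  intros. rewrite <- (Rmult_1_l (J3 a b F t)), Ropp_mult_distr_l, <- J3_scal; auto.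
  apply J3_ext; auto. intros; ring.
Qed.

Definition sl (f : field4) (t : R) : field3 := fun x y z => f x y z t.
Definition Gsq (f : field4) : field4 := fun x y z t => dx f x y z t ^ 2 + dy f x y z t ^ 2 + dz f x y z t ^ 2.
Definition Dval a b Ha (u v w h k l : field4) t := gradsq a b (sl u t) + gradsq a b (sl v t) + gradsq a b (sl w t)
  + Ha^2 * (gradsq a b (sl h t) + gradsq a b (sl k t) + gradsq a b (sl l t)).
Definition Iden (dU dB : R -> R) (A : R) (u w h l : field4) : field4 := fun x y z t =>
  - (dU z * w x y z t * u x y z t) + A * (l x y z t * dB z * u x y z t - w x y z t * dB z * h x y z t + l x y z t * dU z * h x y z t).
Definition Dden (A Rm Re : R) (u v w h k l : field4) : field4 := fun x y z t =>
  (Gsq u x y z t + Gsq v x y z t + Gsq w x y z t) / Re + A / Rm * (Gsq h x y z t + Gsq k x y z t + Gsq l x y z t).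

Lemma per_split a b f : periodic4 a b f -> perx a f /\ pery b f.
Proof. intros H. split; intros x y z t; apply H. Qed.

Lemma isd_lin (f g : R -> R) t df dg c A : is_derive f t df -> is_derive g t dg ->
  is_derive (fun s => c * (f s + A * g s)) t (c * (df + A * dg)).
Proof.
  intros Hf Hg. apply (is_derive_scal (fun s => f s + A * g s) t c).
  apply (is_derive_plus f (fun s => A * g s) t df (A * dg)); auto.
  apply (is_derive_scal g t A dg); auto.
Qed.

Lemma test_rw a b (F G : field4) t : 0 < a -> 0 < b -> cont4 F -> cont4 G ->
  J3 a b (fun x y z t => F x y z t + 3 * G x y z t) t = J3 a b F t + 3 * J3 a b G t.
Proof.
  intros. rewrite J3_plus. rewrite J3_scal. reflexivity. all: auto. apply (cont4_mult (fun _ _ _ _ => 3) G); auto. apply cont4_const.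
Qed.

Lemma J3_div a b c F t : 0 < a -> 0 < b -> cont4 F ->
  J3 a b (fun x y z t => F x y z t / c) t = J3 a b F t / c.
Proof.
  intros. unfold Rdiv. rewrite Rmult_comm, <- J3_scal; auto. apply J3_ext; auto. intros; ring.
Qed.

Ltac cc := unfold Iden, Dden, Gsq, DFx, DFy, DFz, Fx, Fy, Fz; c4.

Lemma energy_deriv fl a b Ha Pm Re u v w h k l p :
  0 < a -> 0 < b -> 0 < Ha -> 0 < Pm -> 0 < Re ->
  is_perturbation fl a b Ha Pm Re u v w h k l p ->
  forall t, 0 <= t ->
  is_derive (energy a b (Ha ^ 2 * Pm) u v w h k l) t
    (Ifun fl a b Ha Pm (sl u t) (sl v t) (sl w t) (sl h t) (sl k t) (sl l t) - Dval a b Ha u v w h k l t / Re).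
Proof.
  intros Ha0 Hb0 HHa HPm HRe HP t Ht.
  unfold is_perturbation in HP. cbv beta iota zeta in HP.
  destruct HP as [[Cu [Cv [Cw [Ch [Ck [Cl Cp]]]]]] [[Pu [Pv [Pw [Ph [Pk [Pl Pp]]]]]] [HBC HE]]].
  c2 Cu. c2 Cv. c2 Cw. c2 Ch. c2 Ck. c2 Cl. c2 Cp. exall.
  pose proof (zc_U fl Ha HHa) as zU. pose proof (zc_B fl Ha HHa) as zB.
  pose proof (zc_dU fl Ha HHa) as zdU. pose proof (zc_dB fl Ha HHa) as zdB.
  unfold zc in zU, zB, zdU, zdB.
  set (A := Ha ^ 2 * Pm) in *. set (Rm := Pm * Re) in *.
  assert (HRm : 0 < Rm) by (unfold Rm; apply Rmult_lt_0_compat; auto).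
  change (is_derive (fun s => / 2 * (J3 a b (Sq u v w) s + A * J3 a b (Sq h k l) s)) t
    (Ifun fl a b Ha Pm (sl u t) (sl v t) (sl w t) (sl h t) (sl k t) (sl l t) - Dval a b Ha u v w h k l t / Re)).
  assert (D1 : is_derive (J3 a b (Sq u v w)) t (J3 a b (dt (Sq u v w)) t)).
  { apply J3_dt; auto. intros x y z s. eexists. apply dt_Sq_pt; auto.
    unfold Sq; c4. rewrite dt_Sq by auto. c4. }
  assert (D2 : is_derive (J3 a b (Sq h k l)) t (J3 a b (dt (Sq h k l)) t)).
  { apply J3_dt; auto. intros x y z s. eexists. apply dt_Sq_pt; auto.
    unfold Sq; c4. rewrite dt_Sq by auto. c4. }
  pose proof (isd_lin _ _ t _ _ (/2) A D1 D2) as D.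
  replace (Ifun fl a b Ha Pm (sl u t) (sl v t) (sl w t) (sl h t) (sl k t) (sl l t) - Dval a b Ha u v w h k l t / Re)
    with (/ 2 * (J3 a b (dt (Sq u v w)) t + A * J3 a b (dt (Sq h k l)) t)); [exact D|].
  clear D D1 D2.
  rewrite !dt_Sq by auto. rewrite !J3_scal by (auto; c4).
  set (LHu := fun x y z t => u x y z t * dt u x y z t + v x y z t * dt v x y z t + w x y z t * dt w x y z t).
  set (LHh := fun x y z t => h x y z t * dt h x y z t + k x y z t * dt k x y z t + l x y z t * dt l x y z t).
  assert (Key : J3 a b (fun x y z t => LHu x y z t + A * LHh x y z t) t =
     Ifun fl a b Ha Pm (sl u t) (sl v t) (sl w t) (sl h t) (sl k t) (sl l t) - Dval a b Ha u v w h k l t / Re).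
  2:{ rewrite J3_plus, J3_scal in Key by (auto; unfold LHu, LHh; c4).
      rewrite <- Key. unfold LHu, LHh. field. }
  transitivity (J3 a b (fun x y z t => Iden (dU fl Ha) (dB fl Ha) A u w h l x y z t - Dden A Rm Re u v w h k l x y z t
     + DFx (Ubase fl Ha) (Bbase fl Ha) A Rm Re u v w h k l p x y z t + DFy (Ubase fl Ha) (Bbase fl Ha) A Rm Re u v w h k l p x y z t
     + DFz (Ubase fl Ha) (Bbase fl Ha) A Rm Re u v w h k l p x y z t) t).
  { apply J3_ext; auto. intros x y z Hz.
    destruct (HE x y z t ltac:(lra) Ht) as [E1 [E2 [E3 [E4 [E5 [E6 [Q1 Q2]]]]]]].
    unfold lap in *. unfold LHu, LHh, Iden, Dden, Gsq, DFx, DFy, DFz.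
    apply (energy_identity_abs A Rm Re (Bbase fl Ha z) (Ubase fl Ha z) (dB fl Ha z) (dU fl Ha z) (h x y z t) (dt h x y z t) (dx h x y z t) (dx (dx h) x y z t) (dy h x y z t) (dy (dy h) x y z t) (dz h x y z t) (dz (dz h) x y z t) (k x y z t) (dt k x y z t) (dx k x y z t) (dx (dx k) x y z t) (dy k x y z t) (dy (dy k) x y z t) (dz k x y z t) (dz (dz k) x y z t) (l x y z t) (dt l x y z t) (dx l x y z t) (dx (dx l) x y z t) (dy l x y z t) (dy (dy l) x y z t) (dz l x y z t) (dz (dz l) x y z t) (p x y z t) (dx p x y z t) (dy p x y z t) (dz p x y z t) (u x y z t) (dt u x y z t) (dx u x y z t) (dx (dx u) x y z t) (dy u x y z t) (dy (dy u) x y z t) (dz u x y z t) (dz (dz u) x y z t) (v x y z t) (dt v x y z t) (dx v x y z t) (dx (dx v) x y z t) (dy v x y z t) (dy (dy v) x y z t) (dz v x y z t) (dz (dz v) x y z t) (w x y z t) (dt w x y z t) (dx w x y z t) (dx (dx w) x y z t) (dy w x y z t) (dy (dy w) x y z t) (dz w x y z t) (dz (dz w) x y z t)); auto; lra. }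
  destruct (per_split _ _ _ Pu) as [pxu pyu]. destruct (per_split _ _ _ Pv) as [pxv pyv].
  destruct (per_split _ _ _ Pw) as [pxw pyw]. destruct (per_split _ _ _ Ph) as [pxh pyh].
  destruct (per_split _ _ _ Pk) as [pxk pyk]. destruct (per_split _ _ _ Pl) as [pxl pyl].
  destruct (per_split _ _ _ Pp) as [pxp pyp].
  pose proof (perx_dx a u pxu ltac:(assumption)) as pxdu. pose proof (perx_dx a v pxv ltac:(assumption)) as pxdv.
  pose proof (perx_dx a w pxw ltac:(assumption)) as pxdw. pose proof (perx_dx a h pxh ltac:(assumption)) as pxdh.
  pose proof (perx_dx a k pxk ltac:(assumption)) as pxdk. pose proof (perx_dx a l pxl ltac:(assumption)) as pxdl.
  pose proof (pery_dy b u pyu ltac:(assumption)) as pydu. pose proof (pery_dy b v pyv ltac:(assumption)) as pydv.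
  pose proof (pery_dy b w pyw ltac:(assumption)) as pydw. pose proof (pery_dy b h pyh ltac:(assumption)) as pydh.
  pose proof (pery_dy b k pyk ltac:(assumption)) as pydk. pose proof (pery_dy b l pyl ltac:(assumption)) as pydl.
  unfold perx, pery in pxu, pxv, pxw, pxh, pxk, pxl, pxp, pyu, pyv, pyw, pyh, pyk, pyl, pyp,
    pxdu, pxdv, pxdw, pxdh, pxdk, pxdl, pydu, pydv, pydw, pydh, pydk, pydl.
  assert (ZX : J3 a b (DFx (Ubase fl Ha) (Bbase fl Ha) A Rm Re u v w h k l p) t = 0).
  { assert (EX : DFx (Ubase fl Ha) (Bbase fl Ha) A Rm Re u v w h k l p = dx (Fx (Ubase fl Ha) (Bbase fl Ha) A Rm Re u v w h k l p)).
    { do 4 (apply functional_extensionality; intro). symmetry. apply is_derive_unique. apply dFx_pt; assumption. }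
    rewrite EX. apply Vx; auto.
    - intros x y z s. eexists. apply dFx_pt; assumption.
    - cc.
    - rewrite <- EX. cc.
    - intros x y z s. unfold Fx.
      rewrite !pxu, !pxv, !pxw, !pxh, !pxk, !pxl, !pxp, !pxdu, !pxdv, !pxdw, !pxdh, !pxdk, !pxdl. reflexivity. }
  assert (ZY : J3 a b (DFy (Ubase fl Ha) (Bbase fl Ha) A Rm Re u v w h k l p) t = 0).
  { assert (EY : DFy (Ubase fl Ha) (Bbase fl Ha) A Rm Re u v w h k l p = dy (Fy (Ubase fl Ha) (Bbase fl Ha) A Rm Re u v w h k l p)).
    { do 4 (apply functional_extensionality; intro). symmetry. apply is_derive_unique. apply dFy_pt; assumption. }
    rewrite EY. apply Vy; auto.
    - intros x y z s. eexists. apply dFy_pt; assumption.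
    - cc.
    - rewrite <- EY. cc.
    - intros x y z s. unfold Fy.
      rewrite !pyu, !pyv, !pyw, !pyh, !pyk, !pyl, !pyp, !pydu, !pydv, !pydw, !pydh, !pydk, !pydl. reflexivity. }
  assert (ZZ : J3 a b (DFz (Ubase fl Ha) (Bbase fl Ha) A Rm Re u v w h k l p) t = 0).
  { assert (EZ : DFz (Ubase fl Ha) (Bbase fl Ha) A Rm Re u v w h k l p = dz (Fz (Ubase fl Ha) (Bbase fl Ha) A Rm Re u v w h k l p)).
    { do 4 (apply functional_extensionality; intro). symmetry. apply is_derive_unique. apply dFz_pt; assumption. }
    rewrite EZ. apply Vz; auto.
    - intros x y z. eexists. apply dFz_pt; assumption.
    - rewrite <- EZ. cc.
    - intros x y. destruct (HBC x y t Ht 1 (or_introl eq_refl)) as [b1 [b2 [b3 [b4 [b5 b6]]]]].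
      destruct (HBC x y t Ht (-1) (or_intror eq_refl)) as [c1 [c2 [c3 [c4 [c5 c6]]]]].
      unfold Fz. rewrite b1, b2, b3, b4, b5, b6, c1, c2, c3, c4, c5, c6. split; (match goal with |- ?X = _ => change (@eq R X 0) end); ring. }
  assert (HI : J3 a b (Iden (dU fl Ha) (dB fl Ha) A u w h l) t = Ifun fl a b Ha Pm (sl u t) (sl v t) (sl w t) (sl h t) (sl k t) (sl l t)).
  { unfold Iden. rewrite J3_plus, J3_opp, J3_scal, J3_plus, J3_minus by (auto; cc). reflexivity. }
  assert (HD : J3 a b (Dden A Rm Re u v w h k l) t = (gradsq a b (sl u t) + gradsq a b (sl v t) + gradsq a b (sl w t)) / Re
      + A / Rm * (gradsq a b (sl h t) + gradsq a b (sl k t) + gradsq a b (sl l t))).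
  { unfold Dden. rewrite J3_plus, J3_div, J3_scal, !J3_plus by (auto; cc). reflexivity. }
  rewrite !J3_plus, J3_minus by (auto; cc).
  rewrite ZX, ZY, ZZ, HI, HD. unfold Dval. unfold A, Rm. match goal with |- ?X = ?Y => change (@eq R X Y) end. field. split; lra.
Qed.

Lemma cont3_op2 (op : R -> R -> R)
  (Hop : forall a b eps, 0 < eps -> exists e, 0 < e /\ forall a' b',
     Rabs (a' - a) < e -> Rabs (b' - b) < e -> Rabs (op a' b' - op a b) < eps)
  (F G : field3) : cont3 F -> cont3 G -> cont3 (fun x y z => op (F x y z) (G x y z)).
Proof.
  intros HF HG x y z eps He.
  destruct (Hop (F x y z) (G x y z) eps He) as [e [He0 He']].
  destruct (HF x y z e He0) as [d1 [Hd1 Hd1']].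
  destruct (HG x y z e He0) as [d2 [Hd2 Hd2']].
  exists (Rmin d1 d2). split. apply Rmin_glb_lt; auto.
  intros x' y' z' H1 H2 H3. apply He'.
  apply Hd1'; eapply Rlt_le_trans; eauto; apply Rmin_l.
  apply Hd2'; eapply Rlt_le_trans; eauto; apply Rmin_r.
Qed.
Lemma cont3_minus F G : cont3 F -> cont3 G -> cont3 (fun x y z => F x y z - G x y z).
Proof. apply (cont3_op2 Rminus minus_close). Qed.
Lemma cont3_mult F G : cont3 F -> cont3 G -> cont3 (fun x y z => F x y z * G x y z).
Proof. apply (cont3_op2 Rmult mult_close). Qed.
Lemma cont3_z : cont3 (fun x y z => z).
Proof. intros x y z eps He. exists eps. split; auto. Qed.
Lemma cont3_sl F t : cont4 F -> cont3 (fun x y z => F x y z t).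
Proof.
  intros HF x y z eps He. destruct (HF x y z t eps He) as [d [Hd Hd']]. exists d; split; auto.
  intros. apply Hd'; auto. rewrite Rminus_eq_0, Rabs_R0; auto.
Qed.
Lemma cont3_sl0 F t : cont4 F -> cont3 (fun x y z => F x y 0 t).
Proof.
  intros HF x y z eps He. destruct (HF x y 0 t eps He) as [d [Hd Hd']]. exists d; split; auto.
  intros. apply Hd'; auto; rewrite Rminus_eq_0, Rabs_R0; auto.
Qed.

Lemma cont4_scale G t : cont4 G -> cont4 (fun x y s z => G x y (z * s) t).
Proof.
  intros HG x y s z eps He. destruct (HG x y (z*s) t eps He) as [d [Hd Hd']].
  destruct (mult_close z s d Hd) as [e [He0 He']].
  exists (Rmin d e). split. apply Rmin_glb_lt; auto.
  intros x' y' s' z' H1 H2 H3 H4. apply Hd'.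
  eapply Rlt_le_trans; [eassumption|apply Rmin_l].
  eapply Rlt_le_trans; [eassumption|apply Rmin_l].
  apply He'; (eapply Rlt_le_trans; [eassumption|apply Rmin_r]).
  rewrite Rminus_eq_0, Rabs_R0; auto.
Qed.

Lemma VB G t : cont4 G -> cont3 (fun x y z => RInt (fun s => G x y s t) 0 z).
Proof.
  intros HG.
  assert (E : (fun x y z => RInt (fun s => G x y s t) 0 z) = (fun x y z => z * RInt (fun s => G x y (z * s) t) 0 1)).
  { do 3 (apply functional_extensionality; intro). rename x1 into z.
    pose proof (RInt_comp_lin (fun s => G x x0 s t) z 0 0 1) as H.
    replace (z * 0 + 0) with 0 in H by ring. replace (z * 1 + 0) with z in H by ring.
    rewrite <- H. rewrite <- RInt_scalR. apply RInt_ext. intros. unfold scal; simpl; unfold mult; simpl.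
    replace (z * x1 + 0) with (z * x1) by ring. reflexivity.
    apply ex_RInt_cR. intros. apply (cont4_cz (fun x y s z => G x y (z * s) t)). apply cont4_scale; auto.
    apply ex_RInt_cR. intros. apply cont4_cz; auto. }
  rewrite E. apply cont3_mult. apply cont3_z.
  apply (cont3_RInt (fun x y s z => G x y (z * s) t) 0 1). lra. apply cont4_scale; auto.
Qed.

Lemma adm_sl a b f t : C1_4 f -> periodic4 a b f -> (forall x y, f x y 1 t = 0 /\ f x y (-1) t = 0) ->
  admissible3 a b (sl f t).
Proof.
  intros [P [C0 [Cx [Cy [Cz Ct]]]]] Hp Hb. split; [|split].
  - split; [|split; [|split; [|split]]].
    + intros x y z. destruct (P x y z t) as [? [? [? ?]]]. auto.
    + apply cont3_sl; auto.
    + apply (cont3_sl (dx f)); auto.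
    + apply (cont3_sl (dy f)); auto.
    + apply (cont3_sl (dz f)); auto.
  - intros x y z. apply Hp.
  - auto.
Qed.

Ltac exall2 := repeat match goal with
  | H : ex_partials4 _ |- _ => destruct (ex_of_partials _ H) as [?Exx [?Exy [?Exz ?Ext]]]; clear H
  end.

Lemma isd_const_minus (f : R -> R) c x df : is_derive f x df -> is_derive (fun s => c - f s) x (- df).
Proof.
  intros H. replace (- df) with (0 - df) by ring.
  apply (is_derive_minus (fun _ => c) f x 0 df); auto. apply (is_derive_const (V := R_NormedModule)).
Qed.
Lemma isd_minus2 (f g : R -> R) x df dg : is_derive f x df -> is_derive g x dg -> is_derive (fun s => f s - g s) x (df - dg).
Proof. intros. apply (is_derive_minus f g x df dg); auto. Qed.
Lemma isd_plus2 (f g : R -> R) x df dg : is_derive f x df -> is_derive g x dg -> is_derive (fun s => f s + g s) x (df + dg).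
Proof. intros. apply (is_derive_plus f g x df dg); auto. Qed.

Lemma modify a b (u v w : field4) t : 0 < a -> 0 < b -> C2_4 u -> C2_4 v -> C2_4 w ->
  periodic4 a b u -> periodic4 a b v -> periodic4 a b w ->
  (forall x y, w x y 1 t = 0 /\ w x y (-1) t = 0) ->
  (forall x y z, -1 <= z <= 1 -> dx u x y z t + dy v x y z t + dz w x y z t = 0) ->
  exists wS : field3, admissible3 a b wS /\
   (forall x y z, ex3 (sl u t) x y z + ey3 (sl v t) x y z + ez3 wS x y z = 0) /\
   (forall x y z, -1 <= z <= 1 -> wS x y z = w x y z t /\ ex3 wS x y z = dx w x y z t /\
        ey3 wS x y z = dy w x y z t /\ ez3 wS x y z = dz w x y z t).
Proof.
  intros Ha Hb Cu Cv Cw Pu Pv Pw Hbw Hdiv.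
  c2 Cu. c2 Cv. c2 Cw. exall2.
  set (G4 := fun x y s t' => dx u x y s t' + dy v x y s t').
  set (G4x := fun x y s t' => dx (dx u) x y s t' + dx (dy v) x y s t').
  set (G4y := fun x y s t' => dy (dx u) x y s t' + dy (dy v) x y s t').
  assert (CG : cont4 G4) by (unfold G4; c4).
  assert (CGx : cont4 G4x) by (unfold G4x; c4).
  assert (CGy : cont4 G4y) by (unfold G4y; c4).
  set (wS := fun x y z => w x y 0 t - RInt (fun s => G4 x y s t) 0 z).
  assert (EZ : forall x y z, is_derive (fun s => wS x y s) z (- G4 x y z t)).
  { intros x y z. unfold wS. apply isd_const_minus.
    apply (is_derive_RInt (fun s => G4 x y s t) (fun s => RInt (fun s => G4 x y s t) 0 s) 0 z).
    - exists (mkposreal 1 Rlt_0_1). intros. apply (RInt_correct (V := R_CompleteNormedModule)).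
      apply ex_RInt_cR. intros. apply cont4_cz; auto.
    - apply cont4_cz; auto. }
  assert (EX : forall x y z, is_derive (fun s => wS s y z) x (dx w x y 0 t - RInt (fun s => G4x x y s t) 0 z)).
  { intros x y z. unfold wS. apply isd_minus2.
    - apply Derive_correct. auto.
    - apply (param_deriv (fun s z' => G4 s y z' t) (fun s z' => G4x s y z' t)).
      + intros s z'. unfold G4, G4x. apply isd_plus2; apply Derive_correct; auto.
      + intros. apply c2d_xz; auto.
      + intros. apply c2d_xz; auto. }
  assert (EY : forall x y z, is_derive (fun s => wS x s z) y (dy w x y 0 t - RInt (fun s => G4y x y s t) 0 z)).
  { intros x y z. unfold wS. apply isd_minus2.
    - apply Derive_correct. auto.
    - apply (param_deriv (fun s z' => G4 x s z' t) (fun s z' => G4y x s z' t)).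
      + intros s z'. unfold G4, G4y. apply isd_plus2; apply Derive_correct; auto.
      + intros. apply c2d_yz; auto.
      + intros. apply c2d_yz; auto. }
  assert (L : forall x y z, -1 <= z <= 1 -> wS x y z = w x y z t).
  { intros x y z Hz. unfold wS.
    assert (R1 : RInt (fun s => dz w x y s t) 0 z = w x y z t - w x y 0 t).
    { apply (RInt_Derive (fun s => w x y s t)). intros; auto. intros. apply (cont4_cz (dz w)); auto. }
    assert (R2 : RInt (fun s => G4 x y s t) 0 z = -1 * RInt (fun s => dz w x y s t) 0 z).
    { rewrite <- RInt_scalR. apply RInt_ext. intros s Hs. unfold G4.
      assert (-1 <= s <= 1).
      { destruct (Rle_dec 0 z). rewrite Rmin_left, Rmax_right in Hs; lra. rewrite Rmin_right, Rmax_left in Hs; lra. }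
      pose proof (Hdiv x y s H). lra.
      apply ex_RInt_cR. intros. apply (cont4_cz (dz w)); auto. }
    rewrite R2, R1. ring. }
  exists wS. split; [|split].
  - split; [|split].
    + split; [|split; [|split; [|split]]].
      * intros x y z. split; [|split]; eexists; [apply EX|apply EY|apply EZ].
      * unfold wS. apply (cont3_minus (fun x y z => w x y 0 t)). apply cont3_sl0; auto. apply VB; auto.
      * replace (ex3 wS) with (fun x y z => dx w x y 0 t - RInt (fun s => G4x x y s t) 0 z).
        apply (cont3_minus (fun x y z => dx w x y 0 t)). apply (cont3_sl0 (dx w)); auto. apply VB; auto.
        do 3 (apply functional_extensionality; intro). symmetry. apply is_derive_unique. apply EX.
      * replace (ey3 wS) with (fun x y z => dy w x y 0 t - RInt (fun s => G4y x y s t) 0 z).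
        apply (cont3_minus (fun x y z => dy w x y 0 t)). apply (cont3_sl0 (dy w)); auto. apply VB; auto.
        do 3 (apply functional_extensionality; intro). symmetry. apply is_derive_unique. apply EY.
      * replace (ez3 wS) with (fun x y z => - G4 x y z t).
        apply (cont3_sl (fun x y z t => - G4 x y z t)). c4.
        do 3 (apply functional_extensionality; intro). symmetry. apply is_derive_unique. apply EZ.
    + intros x y z. destruct (per_split _ _ _ Pu) as [pxu pyu]. destruct (per_split _ _ _ Pv) as [pxv pyv].
      destruct (per_split _ _ _ Pw) as [pxw pyw].
      pose proof (perx_dx a u pxu ltac:(assumption)) as pxdu. pose proof (perx_dy a v pxv) as pxdv.
      pose proof (pery_dx b u pyu) as pydu. pose proof (pery_dy b v pyv ltac:(assumption)) as pydv.
      unfold perx, pery in *. unfold wS. split.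
      * rewrite pxw. f_equal. apply RInt_ext. intros. unfold G4. rewrite pxdu, pxdv. reflexivity.
      * rewrite pyw. f_equal. apply RInt_ext. intros. unfold G4. rewrite pydu, pydv. reflexivity.
    + intros x y. rewrite !L by lra. apply Hbw.
  - intros x y z. assert (E : ez3 wS x y z = - G4 x y z t) by (apply is_derive_unique, EZ).
    rewrite E. unfold G4. change (dx u x y z t + dy v x y z t + - (dx u x y z t + dy v x y z t) = 0). ring.
  - intros x y z Hz. split; [|split; [|split]].
    + apply L; auto.
    + unfold ex3. apply Derive_ext. intros s. apply L; auto.
    + unfold ey3. apply Derive_ext. intros s. apply L; auto.
    + assert (E : ez3 wS x y z = - G4 x y z t) by (apply is_derive_unique, EZ).
      rewrite E. unfold G4. pose proof (Hdiv x y z Hz). lra.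
Qed.

Goal True. idtac "zc_id". Abort.
Lemma zc_id : forall z : R, continuous (fun z : R => z) z.
Proof. intros z. apply continuous_id. Qed.

Lemma poinc_alg f fz z : -1 < z < 1 -> f^2/2 - 2*fz^2 <= f^2 + 2*z*f*fz.
Proof.
  intros. pose proof (pow2_ge_0 (f + 2*z*fz)).
  assert (0 <= 2*fz^2*(1 - z*z)) by (apply Rmult_le_pos; [pose proof (pow2_ge_0 fz); lra | nra]). nra.
Qed.
Lemma isd_zsq (g : R -> R) z dg : is_derive g z dg -> is_derive (fun s => s * g s ^ 2) z (g z ^ 2 + 2 * z * g z * dg).
Proof.
  intros Hg.
  pose proof (is_derive_mult g g z dg dg Hg Hg (fun a b => Rmult_comm a b)) as H1.
  assert (H2 : is_derive (fun s : R => s) z 1) by apply (is_derive_id (K:=R_AbsRing)).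
  pose proof (is_derive_mult (fun s => s) (fun s => mult (g s) (g s)) z 1 _ H2 H1 (fun a b => Rmult_comm a b)) as H3.
  eapply is_derive_ext; [|replace (g z ^ 2 + 2 * z * g z * dg) with (plus (mult 1 (mult (g z) (g z))) (mult z (plus (mult dg (g z)) (mult (g z) dg)))); [exact H3|]].
  intros; simpl; unfold mult; simpl; ring.
  unfold plus, mult; simpl; ring.
Qed.

Lemma prod_bound w F G M : Rabs w <= M -> -(M/2*(F^2+G^2)) <= w*F*G <= M/2*(F^2+G^2).
Proof.
  intros HM. assert (HFG : Rabs (F*G) <= (F^2+G^2)/2).
  { rewrite Rabs_mult. pose proof (pow2_ge_0 (Rabs F - Rabs G)).
    assert (Rabs F ^ 2 = F ^ 2) by (rewrite <- Rsqr_pow2, <- Rsqr_abs, Rsqr_pow2; reflexivity).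
    assert (Rabs G ^ 2 = G ^ 2) by (rewrite <- Rsqr_pow2, <- Rsqr_abs, Rsqr_pow2; reflexivity). nra. }
  assert (Habs : Rabs (w * F * G) <= M/2*(F^2+G^2)).
  { rewrite Rmult_assoc, Rabs_mult. pose proof (Rabs_pos w). pose proof (Rabs_pos (F*G)).
    apply Rle_trans with (M * ((F^2+G^2)/2)). apply Rmult_le_compat; auto. lra. }
  pose proof (Rle_abs (w*F*G)) as X1. pose proof (Rle_abs (-(w*F*G))) as X2. rewrite Rabs_Ropp in X2. lra.
Qed.

Lemma poinc a b f t : 0 < a -> 0 < b -> C2_4 f -> (forall x y, f x y 1 t = 0 /\ f x y (-1) t = 0) ->
  J3 a b (fun x y z t => f x y z t ^ 2) t <= 4 * gradsq a b (sl f t).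
Proof.
  intros Ha Hb Cf Hbd. c2 Cf. exall2. pose proof zc_id as zid.
  set (G := fun x y z t => z * f x y z t ^ 2 : R).
  idtac "a". assert (dGp : forall x y z t, is_derive (fun s => G x y s t) z (f x y z t ^ 2 + 2 * z * f x y z t * dz f x y z t)).
  { intros x y z t'. unfold G. apply (isd_zsq (fun s => f x y s t')). apply Derive_correct. match goal with H : exdz f |- _ => apply H end. }
  idtac "b". assert (dG : dz G = fun x y z t => f x y z t ^ 2 + 2 * z * f x y z t * dz f x y z t).
  { do 4 (apply functional_extensionality; intro). apply is_derive_unique. apply dGp. }
  idtac "c". assert (Z : J3 a b (dz G) t = 0).
  { apply Vz. intros; eexists; apply dGp. rewrite dG; c4.
    intros x y. unfold G. destruct (Hbd x y) as [H1 H2]. rewrite H1, H2. split; (match goal with |- ?X = _ => change (@eq R X 0) end); ring. }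
  idtac "d". rewrite dG in Z.
  idtac "e". assert (L1 : J3 a b (fun x y z t => f x y z t ^ 2 / 2 - 2 * dz f x y z t ^ 2) t <=
               J3 a b (fun x y z t => f x y z t ^ 2 + 2 * z * f x y z t * dz f x y z t) t).
  { apply J3_le; auto; try c4. intros x y z Hz. apply poinc_alg; auto. }
  idtac "f". rewrite Z, J3_minus, J3_div, J3_scal in L1 by (auto; c4).
  idtac "g". assert (L2 : J3 a b (fun x y z t => dz f x y z t ^ 2) t <= gradsq a b (sl f t)).
  { change (gradsq a b (sl f t)) with (J3 a b (Gsq f) t). apply J3_le; auto; unfold Gsq; try c4.
    intros. pose proof (pow2_ge_0 (dx f x y z t)). pose proof (pow2_ge_0 (dy f x y z t)). lra. }
  lra.
Qed.

Goal True. idtac "gradsq_nonneg". Abort.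
Lemma gradsq_nonneg a b f t : 0 < a -> 0 < b -> C2_4 f -> 0 <= gradsq a b (sl f t).
Proof.
  intros Ha Hb Cf. c2 Cf. change (gradsq a b (sl f t)) with (J3 a b (Gsq f) t).
  apply J3_nonneg; auto; unfold Gsq; try c4. intros.
  pose proof (pow2_ge_0 (dx f x y z t)). pose proof (pow2_ge_0 (dy f x y z t)). pose proof (pow2_ge_0 (dz f x y z t)). lra.
Qed.

Goal True. idtac "sq_nonneg". Abort.
Lemma sq_nonneg a b f t : 0 < a -> 0 < b -> cont4 f -> 0 <= J3 a b (fun x y z t => f x y z t ^ 2) t.
Proof. intros. apply J3_nonneg; auto; try c4. intros. apply pow2_ge_0. Qed.

Goal True. idtac "zc_bound". Abort.
Lemma zc_bound (W : R -> R) : zc W -> exists M, 0 <= M /\ forall z, -1 <= z <= 1 -> Rabs (W z) <= M.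
Proof.
  intros HW. destruct (continuity_ab_maj (fun z => Rabs (W z)) (-1) 1) as [Mx [HM _]]. lra.
  - intros c _. apply (continuity_pt_comp W Rabs). apply continuity_pt_filterlim. apply HW.
    apply Rcontinuity_abs.
  - exists (Rabs (W Mx)). split. apply Rabs_pos. auto.
Qed.

Goal True. idtac "J3_prod_zero". Abort.
Lemma J3_prod_zero a b W F G t : 0 < a -> 0 < b -> zc W -> cont4 F -> cont4 G ->
  J3 a b (fun x y z t => F x y z t ^ 2) t = 0 -> J3 a b (fun x y z t => G x y z t ^ 2) t = 0 ->
  J3 a b (fun x y z t => W z * F x y z t * G x y z t) t = 0.
Proof.
  intros Ha Hb HW HF HG ZF ZG. unfold zc in HW. destruct (zc_bound W HW) as [M [HM0 HM]].
  assert (Hb1 : J3 a b (fun x y z t => W z * F x y z t * G x y z t) t <=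
      J3 a b (fun x y z t => M / 2 * (F x y z t ^ 2 + G x y z t ^ 2)) t).
  { apply J3_le; auto; try c4. intros x y z Hz. specialize (HM z ltac:(lra)).
    apply (prod_bound (W z) (F x y z t) (G x y z t) M HM). }
  assert (Hb2 : J3 a b (fun x y z t => - (M / 2 * (F x y z t ^ 2 + G x y z t ^ 2))) t <=
      J3 a b (fun x y z t => W z * F x y z t * G x y z t) t).
  { apply J3_le; auto; try c4. intros x y z Hz. specialize (HM z ltac:(lra)).
    apply (prod_bound (W z) (F x y z t) (G x y z t) M HM). }
  rewrite J3_opp, J3_scal, J3_plus, ZF, ZG in Hb2 by (auto; c4).
  rewrite J3_scal, J3_plus, ZF, ZG in Hb1 by (auto; c4).
  lra.
Qed.

Lemma gronwall (E dE : R -> R) lam t : 0 <= t -> (forall s, 0 <= s -> is_derive E s (dE s)) ->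
  (forall s, 0 <= s -> dE s <= lam * E s) -> E t <= E 0 * exp (lam * t).
Proof.
  intros Ht Hd Hb. destruct (Req_dec t 0) as [->|Ht0].
  - rewrite Rmult_0_r, exp_0. lra.
  - set (g := fun s => E s * exp (- (lam * s))).
    assert (Hg : forall s, 0 <= s -> is_derive g s (dE s * exp (- (lam * s)) + E s * (exp (- (lam * s)) * (- lam)))).
    { intros s Hs. unfold g. pose proof (Hd s Hs) as H.
      replace (dE s * exp (- (lam * s)) + E s * (exp (- (lam * s)) * - lam)) with
        (plus (mult (dE s) (exp (- (lam * s)))) (mult (E s) (exp (- (lam * s)) * - lam))) by (unfold plus, mult; simpl; ring).
      apply (is_derive_mult E (fun s => exp (- (lam * s))) s (dE s) (exp (- (lam * s)) * - lam)); auto.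
      auto_derive; auto. ring. intros; apply Rmult_comm. }
    destruct (MVT_gen g 0 t (fun s => dE s * exp (- (lam * s)) + E s * (exp (- (lam * s)) * (- lam)))) as [c [Hc Heq]].
    + intros x Hx. rewrite Rmin_left in Hx by lra. apply Hg. lra.
    + intros x Hx. rewrite Rmin_left, Rmax_right in Hx by lra. apply continuity_pt_filterlim.
      apply (@ex_derive_continuous R_AbsRing R_NormedModule). eexists. apply Hg. lra.
    + rewrite Rmin_left, Rmax_right in Hc by lra.
      assert (Hneg : dE c * exp (- (lam * c)) + E c * (exp (- (lam * c)) * - lam) <= 0).
      { pose proof (Hb c ltac:(lra)). pose proof (exp_pos (- (lam * c))).
        replace (dE c * exp (- (lam * c)) + E c * (exp (- (lam * c)) * - lam)) with ((dE c - lam * E c) * exp (- (lam * c))) by ring.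
        assert ((dE c - lam * E c) * exp (- (lam * c)) <= 0 * exp (- (lam * c))).
        apply Rmult_le_compat_r; lra. lra. }
      assert (Hgt : g t <= g 0).
      { assert (0 <= t - 0) by lra.
        assert ((dE c * exp (- (lam * c)) + E c * (exp (- (lam * c)) * - lam)) * (t - 0) <= 0 * (t - 0)).
        apply Rmult_le_compat_r; lra. lra. }
      unfold g in Hgt. rewrite Rmult_0_r, Ropp_0, exp_0, Rmult_1_r in Hgt.
      pose proof (exp_pos (lam * t)).
      apply Rmult_le_compat_r with (r := exp (lam * t)) in Hgt; [|lra].
      rewrite Rmult_assoc, <- exp_plus in Hgt. replace (- (lam * t) + lam * t) with 0 in Hgt by ring.
      rewrite exp_0, Rmult_1_r in Hgt. exact Hgt.
Qed.

Lemma int3_ext a b (g1 g2 : field3) : (forall x y z, -1 < z < 1 -> g1 x y z = g2 x y z) -> int3 a b g1 = int3 a b g2.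
Proof.
  intros H. unfold int3. apply RInt_ext; intros x _. apply RInt_ext; intros y _. apply RInt_ext; intros z Hz.
  rewrite Rmin_left in Hz by lra. rewrite Rmax_right in Hz by lra. auto.
Qed.

Lemma gradsq_ext a b (f g : field3) : (forall x y z, -1 <= z <= 1 -> ex3 f x y z = ex3 g x y z /\ ey3 f x y z = ey3 g x y z /\ ez3 f x y z = ez3 g x y z) ->
  gradsq a b f = gradsq a b g.
Proof.
  intros H. unfold gradsq. apply int3_ext. intros x y z Hz. destruct (H x y z ltac:(lra)) as [H1 [H2 H3]].
  rewrite H1, H2, H3. reflexivity.
Qed.

Lemma Ifun_ext fl a b Ha Pm u v w h k l w' l' :
  (forall x y z, -1 <= z <= 1 -> w x y z = w' x y z /\ l x y z = l' x y z) ->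
  Ifun fl a b Ha Pm u v w h k l = Ifun fl a b Ha Pm u v w' h k l'.
Proof.
  intros H. unfold Ifun.
  rewrite (int3_ext a b (fun x y z => dU fl Ha z * w x y z * u x y z) (fun x y z => dU fl Ha z * w' x y z * u x y z)).
  rewrite (int3_ext a b (fun x y z => l x y z * dB fl Ha z * u x y z) (fun x y z => l' x y z * dB fl Ha z * u x y z)).
  rewrite (int3_ext a b (fun x y z => w x y z * dB fl Ha z * h x y z) (fun x y z => w' x y z * dB fl Ha z * h x y z)).
  rewrite (int3_ext a b (fun x y z => l x y z * dU fl Ha z * h x y z) (fun x y z => l' x y z * dU fl Ha z * h x y z)).
  reflexivity.
  all: intros x y z Hz; destruct (H x y z ltac:(lra)) as [H1 H2]; rewrite ?H1, ?H2; reflexivity.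
Qed.

Lemma I_bound fl a b Ha Pm m Re u v w h k l p t :
  0 < a -> 0 < b -> 0 < Ha -> 0 < Pm -> 0 < Re -> 0 < m -> is_sup_ratio fl a b Ha Pm m ->
  is_perturbation fl a b Ha Pm Re u v w h k l p -> 0 <= t ->
  Ifun fl a b Ha Pm (sl u t) (sl v t) (sl w t) (sl h t) (sl k t) (sl l t) <=
  m * D1fun a b Ha (sl u t) (sl v t) (sl w t) (sl h t) (sl k t) (sl l t).
Proof.
  intros Ha0 Hb0 HHa HPm HRe Hm [Hsup _] HP Ht.
  unfold is_perturbation in HP. cbv beta iota zeta in HP.
  destruct HP as [[Cu [Cv [Cw [Ch [Ck [Cl Cp]]]]]] [[Pu [Pv [Pw [Ph [Pk [Pl Pp]]]]]] [HBC HE]]].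
  assert (Bd : forall x y, (u x y 1 t = 0 /\ u x y (-1) t = 0) /\ (v x y 1 t = 0 /\ v x y (-1) t = 0) /\
     (w x y 1 t = 0 /\ w x y (-1) t = 0) /\ (h x y 1 t = 0 /\ h x y (-1) t = 0) /\
     (k x y 1 t = 0 /\ k x y (-1) t = 0) /\ (l x y 1 t = 0 /\ l x y (-1) t = 0)).
  { intros x y. destruct (HBC x y t Ht 1 (or_introl eq_refl)) as [b1 [b2 [b3 [b4 [b5 b6]]]]].
    destruct (HBC x y t Ht (-1) (or_intror eq_refl)) as [c1 [c2 [c3 [c4 [c5 c6]]]]]. tauto. }
  assert (Du : forall x y z, -1 <= z <= 1 -> dx u x y z t + dy v x y z t + dz w x y z t = 0).
  { intros x y z Hz. apply (HE x y z t Hz Ht). }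
  assert (Dh : forall x y z, -1 <= z <= 1 -> dx h x y z t + dy k x y z t + dz l x y z t = 0).
  { intros x y z Hz. apply (HE x y z t Hz Ht). }
  pose proof (gradsq_nonneg a b u t Ha0 Hb0 Cu) as gu. pose proof (gradsq_nonneg a b v t Ha0 Hb0 Cv) as gv.
  pose proof (gradsq_nonneg a b w t Ha0 Hb0 Cw) as gw. pose proof (gradsq_nonneg a b h t Ha0 Hb0 Ch) as gh.
  pose proof (gradsq_nonneg a b k t Ha0 Hb0 Ck) as gk. pose proof (gradsq_nonneg a b l t Ha0 Hb0 Cl) as gl.
  assert (HHa2 : 0 < Ha ^ 2) by (apply pow_lt; auto).
  unfold D1fun.
  destruct (Rlt_le_dec 0 (gradsq a b (sl u t) + gradsq a b (sl w t) + Ha ^ 2 * (gradsq a b (sl h t) + gradsq a b (sl l t)))) as [Hpos|Hnp].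
  - destruct (modify a b u v w t Ha0 Hb0 Cu Cv Cw Pu Pv Pw ltac:(intros x y; apply Bd) Du) as [wS [AwS [DwS LwS]]].
    destruct (modify a b h k l t Ha0 Hb0 Ch Ck Cl Ph Pk Pl ltac:(intros x y; apply Bd) Dh) as [lS [AlS [DlS LlS]]].
    assert (GW : gradsq a b wS = gradsq a b (sl w t)).
    { apply gradsq_ext. intros x y z Hz. destruct (LwS x y z Hz) as [_ [e1 [e2 e3]]]. auto. }
    assert (GL : gradsq a b lS = gradsq a b (sl l t)).
    { apply gradsq_ext. intros x y z Hz. destruct (LlS x y z Hz) as [_ [e1 [e2 e3]]]. auto. }
    assert (IS : in_S a b (sl u t) (sl v t) wS (sl h t) (sl k t) lS).
    { split; [|split; [|split; [|split; [|split; [|split; [|split; [|split]]]]]]].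
      - apply adm_sl; auto. apply Cu. intros; apply Bd.
      - apply adm_sl; auto. apply Cv. intros; apply Bd.
      - auto.
      - apply adm_sl; auto. apply Ch. intros; apply Bd.
      - apply adm_sl; auto. apply Ck. intros; apply Bd.
      - auto.
      - auto.
      - auto.
      - rewrite GW, GL.
        pose proof (sqrt_pos (gradsq a b (sl u t) + gradsq a b (sl v t) + gradsq a b (sl w t))).
        pose proof (sqrt_pos (gradsq a b (sl h t) + gradsq a b (sl k t) + gradsq a b (sl l t))).
        destruct (Rlt_le_dec 0 (gradsq a b (sl u t) + gradsq a b (sl w t))).
        + assert (0 < sqrt (gradsq a b (sl u t) + gradsq a b (sl v t) + gradsq a b (sl w t))) by (apply sqrt_lt_R0; lra). lra.
        + assert (0 < gradsq a b (sl h t) + gradsq a b (sl l t)).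
          { destruct (Rlt_le_dec 0 (gradsq a b (sl h t) + gradsq a b (sl l t))); auto.
            assert (Ha ^ 2 * (gradsq a b (sl h t) + gradsq a b (sl l t)) <= 0) by nra. lra. }
          assert (0 < sqrt (gradsq a b (sl h t) + gradsq a b (sl k t) + gradsq a b (sl l t))) by (apply sqrt_lt_R0; lra). lra. }
    pose proof (Hsup _ _ _ _ _ _ IS) as R.
    rewrite (Ifun_ext fl a b Ha Pm (sl u t) (sl v t) wS (sl h t) (sl k t) lS (sl w t) (sl l t)) in R.
    2:{ intros x y z Hz. split; apply LwS || apply LlS; auto. }
    unfold D1fun in R. rewrite GW, GL in R.
    apply Rmult_le_compat_r with (r := gradsq a b (sl u t) + gradsq a b (sl w t) + Ha ^ 2 * (gradsq a b (sl h t) + gradsq a b (sl l t))) in R; [|lra].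
    unfold Rdiv in R. rewrite Rmult_assoc, Rinv_l in R by lra. lra.
  - assert (Z1 : gradsq a b (sl u t) = 0) by nra. assert (Z2 : gradsq a b (sl w t) = 0) by nra.
    assert (Z3 : gradsq a b (sl h t) = 0) by nra. assert (Z4 : gradsq a b (sl l t) = 0) by nra.
    assert (Su : J3 a b (fun x y z t => u x y z t ^ 2) t = 0).
    { pose proof (poinc a b u t Ha0 Hb0 Cu ltac:(intros; apply Bd)). pose proof (sq_nonneg a b u t Ha0 Hb0 ltac:(apply Cu)). lra. }
    assert (Sw : J3 a b (fun x y z t => w x y z t ^ 2) t = 0).
    { pose proof (poinc a b w t Ha0 Hb0 Cw ltac:(intros; apply Bd)). pose proof (sq_nonneg a b w t Ha0 Hb0 ltac:(apply Cw)). lra. }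
    assert (Sh : J3 a b (fun x y z t => h x y z t ^ 2) t = 0).
    { pose proof (poinc a b h t Ha0 Hb0 Ch ltac:(intros; apply Bd)). pose proof (sq_nonneg a b h t Ha0 Hb0 ltac:(apply Ch)). lra. }
    assert (Sl : J3 a b (fun x y z t => l x y z t ^ 2) t = 0).
    { pose proof (poinc a b l t Ha0 Hb0 Cl ltac:(intros; apply Bd)). pose proof (sq_nonneg a b l t Ha0 Hb0 ltac:(apply Cl)). lra. }
    pose proof (zc_dU fl Ha HHa) as zdU. pose proof (zc_dB fl Ha HHa) as zdB.
    assert (cu : cont4 u) by apply Cu. assert (cw : cont4 w) by apply Cw.
    assert (ch : cont4 h) by apply Ch. assert (cl : cont4 l) by apply Cl.
    assert (T1 : J3 a b (fun x y z t => dU fl Ha z * w x y z t * u x y z t) t = 0) by (apply J3_prod_zero; auto).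
    assert (T2 : J3 a b (fun x y z t => l x y z t * dB fl Ha z * u x y z t) t = 0).
    { rewrite (J3_ext a b _ (fun x y z t => dB fl Ha z * l x y z t * u x y z t)) by (auto; intros; ring). apply J3_prod_zero; auto. }
    assert (T3 : J3 a b (fun x y z t => w x y z t * dB fl Ha z * h x y z t) t = 0).
    { rewrite (J3_ext a b _ (fun x y z t => dB fl Ha z * w x y z t * h x y z t)) by (auto; intros; ring). apply J3_prod_zero; auto. }
    assert (T4 : J3 a b (fun x y z t => l x y z t * dU fl Ha z * h x y z t) t = 0).
    { rewrite (J3_ext a b _ (fun x y z t => dU fl Ha z * l x y z t * h x y z t)) by (auto; intros; ring). apply J3_prod_zero; auto. }
    unfold Ifun. change (- J3 a b (fun x y z t => dU fl Ha z * w x y z t * u x y z t) t +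
      Ha ^ 2 * Pm * (J3 a b (fun x y z t => l x y z t * dB fl Ha z * u x y z t) t -
                     J3 a b (fun x y z t => w x y z t * dB fl Ha z * h x y z t) t +
                     J3 a b (fun x y z t => l x y z t * dU fl Ha z * h x y z t) t) <=
      m * (gradsq a b (sl u t) + gradsq a b (sl w t) + Ha ^ 2 * (gradsq a b (sl h t) + gradsq a b (sl l t)))).
    rewrite T1, T2, T3, T4, Z1, Z2, Z3, Z4. lra.
Qed.

Lemma deriv_bound fl a b Ha Pm m Re u v w h k l p s :
  0 < a -> 0 < b -> 0 < Ha -> 0 < Pm -> 0 < Re -> 0 < m -> Re < / m -> is_sup_ratio fl a b Ha Pm m ->
  is_perturbation fl a b Ha Pm Re u v w h k l p -> 0 <= s ->
  Ifun fl a b Ha Pm (sl u s) (sl v s) (sl w s) (sl h s) (sl k s) (sl l s) - Dval a b Ha u v w h k l s / Re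
  <= m ^ 2 * / (2 * (1 + Pm)) * (Re - / m) * energy a b (Ha ^ 2 * Pm) u v w h k l s.
Proof.
  intros Ha0 Hb0 HHa HPm HRe Hm HReM Hsup HP Hs.
  pose proof (I_bound fl a b Ha Pm m Re u v w h k l p s Ha0 Hb0 HHa HPm HRe Hm Hsup HP Hs) as HI.
  unfold is_perturbation in HP. cbv beta iota zeta in HP.
  destruct HP as [[Cu [Cv [Cw [Ch [Ck [Cl Cp]]]]]] [_ [HBC _]]].
  assert (Bd : forall f, (forall x y, f x y 1 s = 0 /\ f x y (-1) s = 0) -> J3 a b (fun x y z t => f x y z t ^ 2) s <= 4 * gradsq a b (sl f s) -> True) by auto.
  assert (P : forall f, C2_4 f -> (forall x y, f x y 1 s = 0 /\ f x y (-1) s = 0) ->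
     0 <= J3 a b (fun x y z t => f x y z t ^ 2) s <= 4 * gradsq a b (sl f s)).
  { intros f Cf Hb. split. apply sq_nonneg; auto. apply Cf. apply poinc; auto. }
  pose proof (P u Cu ltac:(intros x y; destruct (HBC x y s Hs 1 (or_introl eq_refl)) as [? _]; destruct (HBC x y s Hs (-1) (or_intror eq_refl)) as [? _]; auto)) as Pu.
  pose proof (P v Cv ltac:(intros x y; destruct (HBC x y s Hs 1 (or_introl eq_refl)) as [_ [? _]]; destruct (HBC x y s Hs (-1) (or_intror eq_refl)) as [_ [? _]]; auto)) as Pv.
  pose proof (P w Cw ltac:(intros x y; destruct (HBC x y s Hs 1 (or_introl eq_refl)) as [_ [_ [? _]]]; destruct (HBC x y s Hs (-1) (or_intror eq_refl)) as [_ [_ [? _]]]; auto)) as Pw.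
  pose proof (P h Ch ltac:(intros x y; destruct (HBC x y s Hs 1 (or_introl eq_refl)) as [_ [_ [_ [? _]]]]; destruct (HBC x y s Hs (-1) (or_intror eq_refl)) as [_ [_ [_ [? _]]]]; auto)) as Ph.
  pose proof (P k Ck ltac:(intros x y; destruct (HBC x y s Hs 1 (or_introl eq_refl)) as [_ [_ [_ [_ [? _]]]]]; destruct (HBC x y s Hs (-1) (or_intror eq_refl)) as [_ [_ [_ [_ [? _]]]]]; auto)) as Pk.
  pose proof (P l Cl ltac:(intros x y; destruct (HBC x y s Hs 1 (or_introl eq_refl)) as [_ [_ [_ [_ [_ ?]]]]]; destruct (HBC x y s Hs (-1) (or_intror eq_refl)) as [_ [_ [_ [_ [_ ?]]]]]; auto)) as Pl.
  pose proof (gradsq_nonneg a b u s Ha0 Hb0 Cu) as gu. pose proof (gradsq_nonneg a b v s Ha0 Hb0 Cv) as gv.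
  pose proof (gradsq_nonneg a b w s Ha0 Hb0 Cw) as gw. pose proof (gradsq_nonneg a b h s Ha0 Hb0 Ch) as gh.
  pose proof (gradsq_nonneg a b k s Ha0 Hb0 Ck) as gk. pose proof (gradsq_nonneg a b l s Ha0 Hb0 Cl) as gl.
  assert (cu : cont4 u) by apply Cu. assert (cv : cont4 v) by apply Cv. assert (cw : cont4 w) by apply Cw.
  assert (ch : cont4 h) by apply Ch. assert (ck : cont4 k) by apply Ck. assert (cl : cont4 l) by apply Cl.
  assert (EE : energy a b (Ha ^ 2 * Pm) u v w h k l s =
     / 2 * (J3 a b (fun x y z t => u x y z t ^ 2) s + J3 a b (fun x y z t => v x y z t ^ 2) s + J3 a b (fun x y z t => w x y z t ^ 2) s
      + Ha ^ 2 * Pm * (J3 a b (fun x y z t => h x y z t ^ 2) s + J3 a b (fun x y z t => k x y z t ^ 2) s + J3 a b (fun x y z t => l x y z t ^ 2) s))).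
  { change (energy a b (Ha ^ 2 * Pm) u v w h k l s) with (/ 2 * (J3 a b (Sq u v w) s + Ha ^ 2 * Pm * J3 a b (Sq h k l) s)).
    unfold Sq. rewrite !J3_plus by (auto; c4). reflexivity. }
  rewrite EE. clear EE.
  set (Uu := J3 a b (fun x y z t => u x y z t ^ 2) s) in *. set (Uv := J3 a b (fun x y z t => v x y z t ^ 2) s) in *.
  set (Uw := J3 a b (fun x y z t => w x y z t ^ 2) s) in *. set (Uh := J3 a b (fun x y z t => h x y z t ^ 2) s) in *.
  set (Uk := J3 a b (fun x y z t => k x y z t ^ 2) s) in *. set (Ul := J3 a b (fun x y z t => l x y z t ^ 2) s) in *.
  unfold Dval, D1fun in *.
  set (Gu := gradsq a b (sl u s)) in *. set (Gv := gradsq a b (sl v s)) in *. set (Gw := gradsq a b (sl w s)) in *.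
  set (Gh := gradsq a b (sl h s)) in *. set (Gk := gradsq a b (sl k s)) in *. set (Gl := gradsq a b (sl l s)) in *.
  set (I := Ifun fl a b Ha Pm (sl u s) (sl v s) (sl w s) (sl h s) (sl k s) (sl l s)) in *.
  set (X := Gu + Gv + Gw + Ha ^ 2 * (Gh + Gk + Gl)).
  set (En := / 2 * (Uu + Uv + Uw + Ha ^ 2 * Pm * (Uh + Uk + Ul))).
  assert (HHa2 : 0 < Ha ^ 2) by (apply pow_lt; auto).
  assert (HD1 : Gu + Gw + Ha ^ 2 * (Gh + Gl) <= X).
  { unfold X. assert (Ha ^ 2 * (Gh + Gl) <= Ha ^ 2 * (Gh + Gk + Gl)) by (apply Rmult_le_compat_l; lra). lra. }
  assert (HX0 : 0 <= X).
  { unfold X. assert (0 <= Ha ^ 2 * (Gh + Gk + Gl)) by (apply Rmult_le_pos; lra). lra. }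
  destruct Pu as [Pu1 Pu2]. destruct Pv as [Pv1 Pv2]. destruct Pw as [Pw1 Pw2].
  destruct Ph as [Ph1 Ph2]. destruct Pk as [Pk1 Pk2]. destruct Pl as [Pl1 Pl2].
  assert (HAP : 0 < Ha ^ 2 * Pm) by (apply Rmult_lt_0_compat; auto).
  assert (HE0 : 0 <= En).
  { unfold En. apply Rmult_le_pos. lra. assert (0 <= Ha ^ 2 * Pm * (Uh + Uk + Ul)) by (apply Rmult_le_pos; lra). lra. }
  assert (HEX : / (2 * (1 + Pm)) * En <= X).
  { assert (En <= 2 * (1 + Pm) * X).
    { unfold En, X. assert (Ha ^ 2 * Pm * (Uh + Uk + Ul) <= Ha ^ 2 * Pm * (4 * (Gh + Gk + Gl))) by (apply Rmult_le_compat_l; lra).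
      assert (0 <= Ha ^ 2 * (Gh + Gk + Gl)) by (apply Rmult_le_pos; lra). nra. }
    apply Rmult_le_reg_l with (2 * (1 + Pm)). lra.
    rewrite <- Rmult_assoc, Rinv_r, Rmult_1_l by lra. lra. }
  assert (Hk0 : 0 <= / (2 * (1 + Pm)) * En).
  { apply Rmult_le_pos; auto. left; apply Rinv_0_lt_compat; lra. }
  assert (HmRe : m * Re < 1).
  { apply Rmult_lt_compat_l with (r := m) in HReM; auto. rewrite Rinv_r in HReM; lra. }
  assert (Hneg : m - / Re < 0).
  { assert (m < / Re). { apply Rmult_lt_reg_r with Re; auto. rewrite Rinv_l; lra. } lra. }
  assert (Hcmp : m - / Re <= m ^ 2 * (Re - / m)).
  { assert (m ^ 2 * (Re - / m) - (m - / Re) = (m * Re - 1) ^ 2 / Re) by (field; lra).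
    assert (0 <= (m * Re - 1) ^ 2 / Re) by (apply Rdiv_le_0_compat; [apply pow2_ge_0|lra]). lra. }
  assert (S1 : I - X / Re <= (m - / Re) * X).
  { unfold Rdiv. assert (m * (Gu + Gw + Ha ^ 2 * (Gh + Gl)) <= m * X) by (apply Rmult_le_compat_l; lra). nra. }
  assert (S2 : (m - / Re) * X <= (m - / Re) * (/ (2 * (1 + Pm)) * En)).
  { apply Rmult_le_compat_neg_l; lra. }
  assert (S3 : (m - / Re) * (/ (2 * (1 + Pm)) * En) <= m ^ 2 * (Re - / m) * (/ (2 * (1 + Pm)) * En)).
  { apply Rmult_le_compat_r; lra. }
  replace (m ^ 2 * / (2 * (1 + Pm)) * (Re - / m) * En) with (m ^ 2 * (Re - / m) * (/ (2 * (1 + Pm)) * En)) by ring.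
  lra.
Qed.

Theorem theorem3 :
  forall (fl : basic_flow) (a b Ha Pm m : R),
    0 < a -> 0 < b -> 0 < Ha -> 0 < Pm ->
    is_sup_ratio fl a b Ha Pm m ->
    exists c0 : R, 0 < c0 /\
      forall (Re : R), 0 < Re -> Re < / m ->
      forall (u v w h k l p : field4),
        is_perturbation fl a b Ha Pm Re u v w h k l p ->
        forall t : R, 0 <= t ->
          energy a b (Ha ^ 2 * Pm) u v w h k l t
            <= energy a b (Ha ^ 2 * Pm) u v w h k l 0
               * exp (PI ^ 2 / 2 * c0 * (Re - / m) * t).
Proof.
  intros fl a b Ha Pm m Ha0 Hb0 HHa HPm Hsup.
  pose proof PI_RGT_0 as HPI.
  destruct (Rlt_le_dec 0 m) as [Hm|Hm].
  - exists (2 * m ^ 2 * / (2 * (1 + Pm)) / PI ^ 2). split.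
    + apply Rdiv_lt_0_compat; [|apply pow_lt; auto].
      apply Rmult_lt_0_compat. apply Rmult_lt_0_compat. lra. apply pow_lt; auto.
      apply Rinv_0_lt_compat; lra.
    + intros Re HRe HReM u v w h k l p HP t Ht.
      replace (PI ^ 2 / 2 * (2 * m ^ 2 * / (2 * (1 + Pm)) / PI ^ 2) * (Re - / m) * t)
        with ((m ^ 2 * / (2 * (1 + Pm)) * (Re - / m)) * t) by (field; lra).
      apply (gronwall (energy a b (Ha ^ 2 * Pm) u v w h k l)
        (fun s => Ifun fl a b Ha Pm (sl u s) (sl v s) (sl w s) (sl h s) (sl k s) (sl l s) - Dval a b Ha u v w h k l s / Re)); auto.
      * intros s Hs. apply (energy_deriv fl a b Ha Pm Re u v w h k l p); auto.
      * intros s Hs. apply (deriv_bound fl a b Ha Pm m Re u v w h k l p s); auto.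
  - exists 1. split; [lra|]. intros Re HRe HReM. exfalso.
    destruct Hm as [Hlt|Heq].
    + pose proof (Rinv_lt_0_compat m Hlt). lra.
    + subst m. rewrite Rinv_0 in HReM. lra.
Qed.
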